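(* In the setting below, assume $\varphi(U)$ is an open box $\prod_{i=1}^n(-r_i,r_i)$. Then: (i) there exists a smooth $\hat h$ on $\varphi(U)$ satisfying $\frac{\partial\hat h}{\partial q^\mu}=u_\mu$ for all $\mu=1,\dots,n-m$ if and only if $\frac{\partial u_\nu}{\partial q^\mu}=\frac{\partial u_\mu}{\partial q^\nu}$ on $\varphi(U)$ for all $\mu,\nu\le n-m$ (equivalently, in coordinate-free terms, $\mathrm d\big(\mathrm dh\circ\mathbb F(\mathfrak K\circ\hat{\mathfrak p})\circ(\mathbb F\mathfrak H)^{-1}\big)(\mathsf u,\mathsf v)=0$ for all $\mathsf u,\mathsf v\in\mathbb F\mathfrak H(\hat W)$); (ii) in that case, for every constant $\varpi$, the function $$\hat h(q^1,\dots,q^n)=\sum_{\mu=1}^{n-m}\int_0^{q^\mu}u_\mu(0,\dots,0,t,q^{\mu+1},\dots,q^n)\,\mathrm dt+\frac{\varpi}{2}\sum_{a=1}^m(q^{n-m+a})^2$$ (with $t$ in the $\mu$-th slot) is such a solution; (iii) a solution $\hat h$ having $\mathbf 0$ as a critical point with positive-definite Hessian exists if and only if the matrix $\mathbb M_{\mu\nu}:=\frac{\partial u_\nu}{\partial q^\mu}(\mathbf 0)=\frac{\partial^2h}{\partial q^\mu\partial q^k}(\mathbf 0)\hat{\mathbb P}^{k\tau}(\mathbf 0)\mathbb K_{\tau\nu}(\mathbf 0)$ is positive-definite; and when $\mathbb M$ is positive-definite with least eigenvalue $\lambda_{\min}$, the function in (ii) has this property as soon as $$\varpi>\frac{1}{\lambda_{\min}}\sum_{\mu=1}^{n-m}\sum_{a=1}^m\Big(\frac{\partial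 u_\mu}{\partial q^{n-m+a}}(\mathbf 0)\Big)^2.$$
   Context: Setting: $\mathfrak H$ is a quadratic form on $T^*Q$ ($Q$ a smooth $n$-manifold), i.e. $\mathfrak H(\alpha)=\tfrac12\langle\alpha,\rho^\sharp(\alpha)\rangle$ for a smooth positive-definite fibered inner product $\rho$ on $TQ$; $\mathbb F\mathfrak H=\rho^\sharp:T^*Q\to TQ$ is its fiber derivative ($\langle\beta,\mathbb Ff(\alpha)\rangle=\frac{d}{dt}f(\alpha+t\beta)|_{t=0}$ for smooth $f$ on $T^*Q$). $h:Q\to\mathbb R$ is smooth, $W\subseteq T^*Q$ is a subbundle of rank $m$, $1\le m<n$. $q_0$ is a critical point of $h$ and $(U,\varphi=(q^1,\dots,q^n))$ is a chart with $\varphi(q_0)=\mathbf 0$ such that $\hat W:=(\mathbb F\mathfrak H)^{-1}(\mathrm{span}\{\partial/\partial q^1,\dots,\partial/\partial q^{n-m}\})$ is a complement of $W$ on $U$, with $\hat{\mathfrak p}$ the projection onto $\hat W$ along $W$. $\mathfrak K$ is a quadratic form on $\hat W$ (in applications a solution of the kinetic equation $\{\mathfrak K\circ\hat{\mathfrak p},\mathfrak H\}|_{\hat W}=0$, $\{\cdot,\cdot\}$ the canonical Poisson bracket). The equation $\partial\hat h/\partial q^\mu=u_\mu$ is the local form of the potential matching equation $\big(\mathrm d\hat h\circ\mathbb F\mathfrak H-\mathrm dh\circ\mathbb F(\mathfrak K\circ\hat{\mathfrak p})\big)(\sigma)=0$ for all $\sigma\in\hat W$. Indices: $k\in\{1,\dots,n\}$,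 Greek indices in $\{1,\dots,n-m\}$, $a\in\{1,\dots,m\}$, summation over repeated indices. $\mathbb H_{ij}:=\langle(\mathbb F\mathfrak H)^{-1}(\partial/\partial q^i),\partial/\partial q^j\rangle$; $\sigma_\mu:=\mathbb H_{\mu k}\mathrm dq^k$ is a basis of $\hat W$; $\hat{\mathbb P}^{k\mu}$ is defined by $\hat{\mathfrak p}(\mathrm dq^k)=\hat{\mathbb P}^{k\mu}\sigma_\mu$; $\mathbb K_{\mu\nu}$ is defined by $\mathfrak K(a^\mu\sigma_\mu)=\tfrac12\mathbb K_{\mu\nu}a^\mu a^\nu$. Functions on $U$ are identified with their local representatives, and $u_\mu:=\frac{\partial h}{\partial q^k}\hat{\mathbb P}^{k\tau}\mathbb K_{\tau\mu}$. *)

(* Defs.v *)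
From Stdlib Require Import Reals Lra Lia ClassicalEpsilon.
Open Scope R_scope.

(* Points of R^n are encoded as functions nat -> R whose coordinates of
   index >= n vanish; coordinates are 0-based (q^{i+1} of the paper is x i). *)
Definition point := nat -> R.

Definition zero_pt : point := fun _ => 0.

Fixpoint sum_to (k : nat) (f : nat -> R) : R :=
  match k with
  | O => 0
  | S k' => sum_to k' f + f k'
  end.

Definition box (n : nat) (r : nat -> R) (x : point) : Prop :=
  (forall i, (i < n)%nat -> - r i < x i < r i) /\
  (forall i, (n <= i)%nat -> x i = 0).

Definition upd (x : point) (i : nat) (t : R) : point :=
  fun j => if Nat.eqb j i then t else x j.

Definition has_partial (f : point -> R) (i : nat) (x : point) (l : R) : Prop :=
  derivable_pt_lim (fun t => f (upd x i t)) (x i) l.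

Definition pd (f : point -> R) (i : nat) : point -> R :=
  fun x => epsilon (inhabits 0) (fun l => has_partial f i x l).

Fixpoint iter_pd (is : list nat) (f : point -> R) : point -> R :=
  match is with
  | nil => f
  | cons i is' => pd (iter_pd is' f) i
  end.

Definition continuous_on (n : nat) (D : point -> Prop) (f : point -> R) : Prop :=
  forall x, D x -> forall eps, 0 < eps -> exists delta, 0 < delta /\
    forall y, D y -> (forall i, (i < n)%nat -> Rabs (y i - x i) < delta) ->
      Rabs (f y - f x) < eps.

Definition smooth_on (n : nat) (D : point -> Prop) (f : point -> R) : Prop :=
  forall is : list nat, List.Forall (fun i => (i < n)%nat) is ->
    continuous_on n D (iter_pd is f) /\
    forall i, (i < n)%nat -> forall x, D x ->
      has_partial (iter_pd is f) i x (pd (iter_pd is f) i x).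

(* Riemann integral of f over [a,b] (independent of the integrability proof) *)
Definition integral (f : R -> R) (a b : R) : R :=
  epsilon (inhabits 0)
    (fun I => exists pr : Riemann_integrable f a b, RiemannInt pr = I).

(* k x k matrices as nat -> nat -> R *)
Definition posdef (k : nat) (M : nat -> nat -> R) : Prop :=
  (forall i j, (i < k)%nat -> (j < k)%nat -> M i j = M j i) /\
  forall v : nat -> R, (exists i, (i < k)%nat /\ v i <> 0) ->
    0 < sum_to k (fun i => sum_to k (fun j => v i * M i j * v j)).

Definition eigenvalue (k : nat) (M : nat -> nat -> R) (lam : R) : Prop :=
  exists v : nat -> R, (exists i, (i < k)%nat /\ v i <> 0) /\
    forall i, (i < k)%nat -> sum_to k (fun j => M i j * v j) = lam * v i.

Definition least_eigenvalue (k : nat) (M : nat -> nat -> R) (lam : R) : Prop :=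
  eigenvalue k M lam /\ forall mu, eigenvalue k M mu -> lam <= mu.

(* u_mu = dh/dq^k  P^{k tau} K_{tau mu}  (0-based: k < n, tau < n-m) *)
Definition u_fun (n m : nat) (h : point -> R) (P K : nat -> nat -> point -> R)
    (mu : nat) : point -> R :=
  fun x => sum_to n (fun k => sum_to (n - m) (fun tau =>
             pd h k x * P k tau x * K tau mu x)).

Definition is_solution (n m : nat) (r : nat -> R) (u : nat -> point -> R)
    (hh : point -> R) : Prop :=
  smooth_on n (box n r) hh /\
  forall x, box n r x -> forall mu, (mu < n - m)%nat -> pd hh mu x = u mu x.

Definition integrable_cond (n m : nat) (r : nat -> R) (u : nat -> point -> R) : Prop :=
  forall x, box n r x -> forall mu nu, (mu < n - m)%nat -> (nu < n - m)%nat ->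
    pd (u nu) mu x = pd (u mu) nu x.

Definition slot_pt (q : point) (mu : nat) (t : R) : point :=
  fun j => if Nat.ltb j mu then 0 else if Nat.eqb j mu then t else q j.

Definition hhat_formula (n m : nat) (u : nat -> point -> R) (varpi : R) : point -> R :=
  fun q => sum_to (n - m) (fun mu => integral (fun t => u mu (slot_pt q mu t)) 0 (q mu))
           + varpi / 2 * sum_to m (fun a => (q (n - m + a)%nat) ^ 2).

Definition hessian (hh : point -> R) (x : point) : nat -> nat -> R :=
  fun i j => pd (pd hh j) i x.

Definition critical_posdef (n : nat) (hh : point -> R) (x : point) : Prop :=
  (forall i, (i < n)%nat -> pd hh i x = 0) /\ posdef n (hessian hh x).

(* Main.v *)
Require Import Defs.
From Stdlib Require Import Reals Lra Lia ClassicalEpsilon FunctionalExtensionality PropExtensionality List Classical.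
From Coquelicot Require Import Coquelicot.
Require Import Defs.
Open Scope R_scope.

Lemma hp_iff f i x l : has_partial f i x l <-> is_derive (fun t => f (upd x i t)) (x i) l.
Proof. unfold has_partial. rewrite is_derive_Reals. tauto. Qed.

Lemma pd_spec f i x l : has_partial f i x l -> pd f i x = l.
Proof.
  intro H. unfold pd.
  assert (E : exists l, has_partial f i x l) by (exists l; exact H).
  pose proof (epsilon_spec (inhabits 0) _ E) as H2.
  eapply uniqueness_limite; eauto.
Qed.

Lemma pd_ext f g i x : (forall l, has_partial f i x l <-> has_partial g i x l) -> pd f i x = pd g i x.
Proof.
  intro H. unfold pd. f_equal. apply functional_extensionality. intro l.
  apply propositional_extensionality. apply H.
Qed.

Lemma pd_ext2 f g i j x y : (forall l, has_partial f i x l <-> has_partial g j y l) -> pd f i x = pd g j y.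
Proof.
  intro H. unfold pd. f_equal. apply functional_extensionality. intro l.
  apply propositional_extensionality. apply H.
Qed.

Lemma locally_of (a : R) (P : R -> Prop) :
  (exists d, 0 < d /\ forall t, Rabs (t - a) < d -> P t) -> locally a P.
Proof.
  intros [d [Hd H]]. exists (mkposreal d Hd). intros y Hy. apply H. exact Hy.
Qed.

Lemma upd_same x i : upd x i (x i) = x.
Proof. apply functional_extensionality; intro j; unfold upd.
  destruct (Nat.eqb_spec j i); subst; auto. Qed.

Lemma upd_upd x i s t : upd (upd x i s) i t = upd x i t.
Proof. apply functional_extensionality; intro j; unfold upd.
  destruct (Nat.eqb_spec j i); auto. Qed.

Lemma upd_eq x i t : upd x i t i = t.
Proof. unfold upd. rewrite Nat.eqb_refl. auto. Qed.

Lemma upd_neq x i t j : j <> i -> upd x i t j = x j.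
Proof. intro H. unfold upd. destruct (Nat.eqb_spec j i); auto; contradiction. Qed.

Lemma upd_comm x i j s t : i <> j -> upd (upd x i s) j t = upd (upd x j t) i s.
Proof. intro H. apply functional_extensionality; intro k; unfold upd.
  destruct (Nat.eqb_spec k j); destruct (Nat.eqb_spec k i); subst; auto; contradiction. Qed.

Fixpoint minf (k : nat) (g : nat -> R) : R :=
  match k with O => 1 | S k' => Rmin (minf k' g) (g k') end.

Lemma minf_pos k g : (forall i, (i < k)%nat -> 0 < g i) -> 0 < minf k g.
Proof. induction k; simpl; intros H. lra. apply Rmin_glb_lt. apply IHk; intros; apply H; lia. apply H; lia. Qed.

Lemma minf_le k g i : (i < k)%nat -> minf k g <= g i.
Proof. induction k; simpl; intros H. lia.
  destruct (Nat.eq_dec i k). subst. apply Rmin_r.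
  eapply Rle_trans. apply Rmin_l. apply IHk. lia. Qed.

Definition close (n : nat) (x y : point) (d : R) := forall i, (i < n)%nat -> Rabs (y i - x i) < d.

Lemma box_open n r x : box n r x -> exists d, 0 < d /\
  forall y, close n x y d -> (forall i, (n <= i)%nat -> y i = 0) -> box n r y.
Proof.
  intros [H1 H2]. exists (minf n (fun i => r i - Rabs (x i))). split.
  - apply minf_pos. intros i Hi. specialize (H1 i Hi). unfold Rabs; destruct Rcase_abs; lra.
  - intros y Hy Hz. split; auto. intros i Hi. specialize (Hy i Hi). specialize (H1 i Hi).
    pose proof (minf_le n (fun i => r i - Rabs (x i)) i Hi). simpl in H.
    revert Hy H. unfold Rabs; repeat destruct Rcase_abs; intros; lra.
Qed.

Lemma box_upd_near n r x i : box n r x -> (i < n)%nat ->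
  exists d, 0 < d /\ forall t, Rabs (t - x i) < d -> box n r (upd x i t).
Proof.
  intros Hx Hi. destruct (box_open n r x Hx) as [d [Hd H]]. exists d; split; auto.
  intros t Ht. apply H.
  - intros j Hj. unfold upd. destruct (Nat.eqb_spec j i). subst. auto.
    rewrite Rminus_eq_0, Rabs_R0. auto.
  - intros j Hj. rewrite upd_neq by lia. apply (proj2 Hx). auto.
Qed.

Lemma box_upd n r x i t : box n r x -> (i < n)%nat -> - r i < t < r i -> box n r (upd x i t).
Proof.
  intros [H1 H2] Hi Ht. split.
  - intros j Hj. unfold upd. destruct (Nat.eqb_spec j i). subst; auto. auto.
  - intros j Hj. rewrite upd_neq by lia. auto.
Qed.

Lemma zero_box n r : (forall i, (i < n)%nat -> 0 < r i) -> box n r zero_pt.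
Proof. intros H. split; intros i Hi; unfold zero_pt; auto. specialize (H i Hi); lra. Qed.

Lemma hp_local n r f g i x l : (forall y, box n r y -> f y = g y) -> box n r x -> (i < n)%nat ->
  has_partial f i x l -> has_partial g i x l.
Proof.
  intros E Hx Hi H. rewrite hp_iff in *. eapply is_derive_ext_loc; [|exact H].
  apply locally_of. destruct (box_upd_near n r x i Hx Hi) as [d [Hd Hd2]].
  exists d; split; auto.
Qed.

Lemma pd_local n r f g i x : (forall y, box n r y -> f y = g y) -> box n r x -> (i < n)%nat ->
  pd f i x = pd g i x.
Proof.
  intros E Hx Hi. apply pd_ext. intro l. split; apply hp_local with n r; auto.
  intros; symmetry; auto.
Qed.

Definition Cont n r f := Defs.continuous_on n (box n r) f.
Definition Parts n r f := forall i, (i < n)%nat -> forall x, box n r x -> has_partial f i x (pd f i x).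

Fixpoint Sk n r (k : nat) (f : point -> R) : Prop :=
  match k with
  | O => Cont n r f
  | S k' => Cont n r f /\ Parts n r f /\ forall i, (i < n)%nat -> Sk n r k' (pd f i)
  end.

Lemma Sk_cont n r k f : Sk n r k f -> Cont n r f.
Proof. destruct k; simpl; tauto. Qed.

Lemma Sk_mono n r k f : Sk n r (S k) f -> Sk n r k f.
Proof.
  revert f; induction k; intros f H; simpl in *. tauto.
  destruct H as [H1 [H2 H3]]. split; [auto|split; auto].
Qed.

Lemma Sk_mono_le n r k k' f : (k <= k')%nat -> Sk n r k' f -> Sk n r k f.
Proof. intros Hk; induction Hk; auto. intros H; apply IHHk, Sk_mono, H. Qed.

Lemma iter_pd_app is j f : iter_pd (is ++ j :: nil) f = iter_pd is (pd f j).
Proof. induction is; simpl; auto. rewrite IHis. auto. Qed.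

Lemma smooth_to_Sk n r f : smooth_on n (box n r) f -> forall k, Sk n r k f.
Proof.
  intros H k. revert f H. induction k; intros f H; simpl.
  - apply (H nil); auto.
  - destruct (H nil (Forall_nil _)) as [H1 H2]. split; [exact H1|split].
    + intros i Hi x Hx. apply H2; auto.
    + intros i Hi. apply IHk. intros is His. rewrite <- iter_pd_app. apply H.
      apply Forall_app; split; auto.
Qed.

Lemma Sk_to_smooth n r f : (forall k, Sk n r k f) -> smooth_on n (box n r) f.
Proof.
  intros H is. revert f H. induction is using rev_ind; intros f H Hf.
  - simpl. split. apply (H O). destruct (H 1%nat) as [_ [H2 _]]. intros; apply H2; auto.
  - rewrite iter_pd_app. apply Forall_app in Hf. destruct Hf as [Hf1 Hf2].
    inversion Hf2; subst. apply IHis; [|exact Hf1]. intro k. destruct (H (S k)) as [_ [_ H4]]. apply H4; auto.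
Qed.

Lemma Sk_ext n r k f g : (forall y, box n r y -> f y = g y) -> Sk n r k f -> Sk n r k g.
Proof.
  revert f g; induction k; intros f g E H; simpl in *.
  - intros x Hx eps He. destruct (H x Hx eps He) as [d [Hd Hd2]]. exists d; split; auto.
    intros y Hy Hc. rewrite <- !E by auto. auto.
  - destruct H as [H1 [H2 H3]]. assert (Ep : forall i, (i < n)%nat -> forall y, box n r y -> pd f i y = pd g i y).
    { intros. apply pd_local with n r; auto. }
    split; [|split].
    + intros x Hx eps He. destruct (H1 x Hx eps He) as [d [Hd Hd2]]. exists d; split; auto.
      intros y Hy Hc. rewrite <- !E by auto. auto.
    + intros i Hi x Hx. rewrite <- Ep by auto. apply hp_local with n r f; auto.
    + intros i Hi. apply IHk with (pd f i); auto.
Qed.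

Lemma cont_comp2 n r f g (phi : R -> R -> R) : Cont n r f -> Cont n r g ->
  (forall x, box n r x -> continuity_2d_pt phi (f x) (g x)) ->
  Cont n r (fun x => phi (f x) (g x)).
Proof.
  intros Hf Hg Hp x Hx eps He. destruct (Hp x Hx (mkposreal eps He)) as [d0 Hd0].
  destruct (Hf x Hx d0 (cond_pos d0)) as [d1 [Hd1 H1]].
  destruct (Hg x Hx d0 (cond_pos d0)) as [d2 [Hd2 H2]].
  exists (Rmin d1 d2). split. apply Rmin_pos; auto.
  intros y Hy Hc. apply Hd0.
  - apply H1; auto. intros i Hi. eapply Rlt_le_trans. apply Hc; auto. apply Rmin_l.
  - apply H2; auto. intros i Hi. eapply Rlt_le_trans. apply Hc; auto. apply Rmin_r.
Qed.

Lemma cont_const n r c : Cont n r (fun _ => c).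
Proof. intros x Hx eps He. exists 1; split. lra. intros. rewrite Rminus_eq_0, Rabs_R0; auto. Qed.

Lemma cont_plus n r f g : Cont n r f -> Cont n r g -> Cont n r (fun x => f x + g x).
Proof. intros; apply cont_comp2 with (phi := fun u v => u + v); auto.
  intros; apply continuity_2d_pt_plus; [apply continuity_2d_pt_id1|apply continuity_2d_pt_id2]. Qed.

Lemma cont_mult n r f g : Cont n r f -> Cont n r g -> Cont n r (fun x => f x * g x).
Proof. intros; apply cont_comp2 with (phi := fun u v => u * v); auto.
  intros; apply continuity_2d_pt_mult; [apply continuity_2d_pt_id1|apply continuity_2d_pt_id2]. Qed.

Lemma cont_coord n r j : Cont n r (fun x => x j).
Proof.
  intros x Hx eps He. exists eps; split; auto. intros y Hy Hc.
  destruct (Compare_dec.lt_dec j n). apply Hc; auto.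
  rewrite (proj2 Hy j), (proj2 Hx j) by lia. rewrite Rminus_eq_0, Rabs_R0; auto.
Qed.

Lemma hp_const c i x : has_partial (fun _ => c) i x 0.
Proof. rewrite hp_iff. exact (is_derive_const (K:=R_AbsRing) c (x i)). Qed.

Lemma pd_const c i : pd (fun _ => c) i = fun _ => 0.
Proof. apply functional_extensionality; intro x. apply pd_spec, hp_const. Qed.

Lemma hp_plus f g i x a b : has_partial f i x a -> has_partial g i x b ->
  has_partial (fun y => f y + g y) i x (a + b).
Proof. rewrite !hp_iff. intros H1 H2. pose proof (is_derive_plus _ _ _ _ _ H1 H2) as H3. exact H3. Qed.

Lemma hp_mult f g i x a b : has_partial f i x a -> has_partial g i x b ->
  has_partial (fun y => f y * g y) i x (a * g x + f x * b).
Proof. rewrite !hp_iff. intros H1 H2.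
  pose proof (is_derive_mult (K:=R_AbsRing) _ _ _ _ _ H1 H2) as H3.
  specialize (H3 Rmult_comm). simpl in H3. rewrite upd_same in H3. exact H3. Qed.

Lemma hp_coord j i x : has_partial (fun y => y j) i x (if Nat.eqb j i then 1 else 0).
Proof. rewrite hp_iff. unfold upd. destruct (Nat.eqb j i).
  exact (is_derive_id (K:=R_AbsRing) (x i)). exact (is_derive_const (K:=R_AbsRing) (x j) (x i)). Qed.

Lemma pd_coord j i : pd (fun y => y j) i = fun _ => if Nat.eqb j i then 1 else 0.
Proof. apply functional_extensionality; intro x. apply pd_spec, hp_coord. Qed.

Lemma hp_sum N F i x l : (forall a, (a < N)%nat -> has_partial (F a) i x (l a)) ->
  has_partial (fun y => sum_to N (fun a => F a y)) i x (sum_to N l).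
Proof.
  induction N; intros H; simpl.
  - apply hp_const.
  - apply hp_plus. apply IHN; intros; apply H; lia. apply H; lia.
Qed.

Lemma Sk_const n r k c : Sk n r k (fun _ => c).
Proof.
  revert c; induction k; intros c; simpl. apply cont_const.
  split. apply cont_const. split.
  - intros i Hi x Hx. rewrite pd_const. apply hp_const.
  - intros i Hi. rewrite pd_const. apply IHk.
Qed.

Lemma Sk_plus n r k f g : Sk n r k f -> Sk n r k g -> Sk n r k (fun x => f x + g x).
Proof.
  revert f g; induction k; intros f g Hf Hg; simpl in *.
  - apply cont_plus; auto.
  - destruct Hf as [F1 [F2 F3]], Hg as [G1 [G2 G3]].
    assert (E : forall i, (i < n)%nat -> forall x, box n r x -> pd (fun x => f x + g x) i x = pd f i x + pd g i x).
    { intros. apply pd_spec. apply hp_plus; auto. }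
    split; [apply cont_plus; auto|split].
    + intros i Hi x Hx. rewrite E by auto. apply hp_plus; auto.
    + intros i Hi. apply Sk_ext with (fun x => pd f i x + pd g i x). intros; rewrite E; auto.
      apply IHk; auto.
Qed.

Lemma Sk_mult n r k f g : Sk n r k f -> Sk n r k g -> Sk n r k (fun x => f x * g x).
Proof.
  revert f g; induction k; intros f g Hf Hg.
  - simpl in *. apply cont_mult; auto.
  - pose proof (Sk_mono _ _ _ _ Hf) as Hf'. pose proof (Sk_mono _ _ _ _ Hg) as Hg'.
    simpl in Hf, Hg. destruct Hf as [F1 [F2 F3]], Hg as [G1 [G2 G3]].
    assert (E : forall i, (i < n)%nat -> forall x, box n r x ->
      pd (fun x => f x * g x) i x = pd f i x * g x + f x * pd g i x).
    { intros. apply pd_spec. apply hp_mult; auto. }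
    simpl. split; [apply cont_mult; auto|split].
    + intros i Hi x Hx. rewrite E by auto. apply hp_mult; auto.
    + intros i Hi. apply Sk_ext with (fun x => pd f i x * g x + f x * pd g i x). intros; rewrite E; auto.
      apply Sk_plus; apply IHk; auto.
Qed.

Lemma Sk_sum n r k N F : (forall a, (a < N)%nat -> Sk n r k (F a)) ->
  Sk n r k (fun x => sum_to N (fun a => F a x)).
Proof.
  induction N; intros H; simpl. apply Sk_const.
  apply Sk_plus. apply IHN; intros; apply H; lia. apply H; lia.
Qed.

Lemma Sk_coord n r k j : Sk n r k (fun x => x j).
Proof.
  destruct k; simpl. apply cont_coord. split. apply cont_coord. split.
  - intros i Hi x Hx. rewrite pd_coord. apply hp_coord.
  - intros i Hi. rewrite pd_coord. apply Sk_const.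
Qed.

Lemma Sk_pd n r f i : (i < n)%nat -> (forall k, Sk n r k f) -> forall k, Sk n r k (pd f i).
Proof. intros Hi H k. destruct (H (S k)) as [_ [_ H3]]. apply H3; auto. Qed.

Definition zb (nu : nat) (q : point) : point := fun j => if Nat.ltb j nu then 0 else q j.

Lemma box_r_pos n r x i : box n r x -> (i < n)%nat -> 0 < r i.
Proof. intros [H _] Hi. specialize (H i Hi). lra. Qed.

Lemma zb_box n r nu q : box n r q -> box n r (zb nu q).
Proof.
  intros Hq. split.
  - intros i Hi. unfold zb. destruct (Nat.ltb i nu). pose proof (box_r_pos n r q i Hq Hi). lra.
    apply (proj1 Hq); auto.
  - intros i Hi. unfold zb. destruct (Nat.ltb i nu); auto. apply (proj2 Hq); auto.
Qed.

Lemma zb_upd_lt nu q i t : (i < nu)%nat -> zb nu (upd q i t) = zb nu q.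
Proof. intros H. apply functional_extensionality; intro j; unfold zb, upd.
  destruct (Nat.ltb_spec j nu); auto. destruct (Nat.eqb_spec j i); auto. lia. Qed.

Lemma zb_upd_ge nu q i t : (nu <= i)%nat -> zb nu (upd q i t) = upd (zb nu q) i t.
Proof. intros H. apply functional_extensionality; intro j; unfold zb, upd.
  destruct (Nat.ltb_spec j nu); destruct (Nat.eqb_spec j i); auto; lia. Qed.

Lemma zb_ge nu q i : (nu <= i)%nat -> zb nu q i = q i.
Proof. intros H; unfold zb. destruct (Nat.ltb_spec i nu); auto; lia. Qed.

Lemma zb_0 q : zb 0 q = q.
Proof. apply functional_extensionality; intro j; unfold zb. destruct (Nat.ltb_spec j 0); auto; lia. Qed.

Lemma Sk_zb n r k nu G : Sk n r k G -> Sk n r k (fun q => G (zb nu q)).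
Proof.
  revert G; induction k; intros G HG.
  - simpl in *. intros x Hx eps He. destruct (HG (zb nu x) (zb_box _ _ _ _ Hx) eps He) as [d [Hd H]].
    exists d; split; auto. intros y Hy Hc. apply H. apply zb_box; auto.
    intros i Hi. unfold zb. destruct (Nat.ltb i nu). rewrite Rminus_eq_0, Rabs_R0; auto. auto.
  - assert (E : forall i, pd (fun q => G (zb nu q)) i =
        if Nat.ltb i nu then (fun _ => 0) else (fun q => pd G i (zb nu q))).
    { intros i. apply functional_extensionality; intro x. destruct (Nat.ltb_spec i nu).
      - apply pd_spec. rewrite hp_iff. eapply is_derive_ext; [|exact (is_derive_const (K:=R_AbsRing) (G (zb nu x)) (x i))].
        intros t; simpl. rewrite zb_upd_lt; auto.
      - apply pd_ext2. intros l. rewrite !hp_iff. rewrite zb_ge by auto.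
        split; apply is_derive_ext; intros t; rewrite zb_upd_ge; auto. }
    pose proof (Sk_mono _ _ _ _ HG) as HG'.
    simpl in HG. destruct HG as [G1 [G2 G3]]. simpl. split; [|split].
    + apply (Sk_cont n r k). apply (IHk G HG').
    + intros i Hi x Hx. rewrite E. destruct (Nat.ltb_spec i nu).
      * rewrite hp_iff. eapply is_derive_ext; [|exact (is_derive_const (K:=R_AbsRing) (G (zb nu x)) (x i))].
        intros t; simpl. rewrite zb_upd_lt; auto.
      * pose proof (G2 i Hi (zb nu x) (zb_box _ _ _ _ Hx)) as H2. rewrite hp_iff in *.
        rewrite zb_ge in H2 by auto. eapply is_derive_ext; [|exact H2]. intros t. simpl. rewrite zb_upd_ge; auto.
    + intros i Hi. rewrite E. destruct (Nat.ltb i nu). apply Sk_const. apply IHk. apply G3; auto.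
Qed.

Lemma slot_zb q nu t : slot_pt q nu t = upd (zb nu q) nu t.
Proof. apply functional_extensionality; intro j; unfold slot_pt, upd, zb.
  destruct (Nat.ltb_spec j nu); destruct (Nat.eqb_spec j nu); auto; lia. Qed.

Lemma slot_upd_le q nu j s t : (j <= nu)%nat -> slot_pt (upd q j s) nu t = slot_pt q nu t.
Proof. intros H. rewrite !slot_zb. destruct (Nat.eq_dec j nu).
  - subst. rewrite zb_upd_ge by lia. apply upd_upd.
  - rewrite zb_upd_lt by lia. auto. Qed.

Lemma slot_upd_gt q nu j s t : (nu < j)%nat -> slot_pt (upd q j s) nu t = upd (slot_pt q nu t) j s.
Proof. intros H. rewrite !slot_zb. rewrite zb_upd_ge by lia. apply upd_comm. lia. Qed.

Lemma slot_line q nu t0 t : upd (slot_pt q nu t0) nu t = slot_pt q nu t.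
Proof. rewrite !slot_zb. apply upd_upd. Qed.

Lemma slot_top q nu : slot_pt q nu (q nu) = zb nu q.
Proof. rewrite slot_zb. rewrite <- (zb_ge nu q nu) by lia. apply upd_same. Qed.

Lemma slot_bot q nu : slot_pt q nu 0 = zb (S nu) q.
Proof. apply functional_extensionality; intro j; unfold slot_pt, zb.
  destruct (Nat.ltb_spec j nu); destruct (Nat.eqb_spec j nu); destruct (Nat.ltb_spec j (S nu)); auto; lia. Qed.

Lemma slot_gt q nu t j : (nu < j)%nat -> slot_pt q nu t j = q j.
Proof. intros H; unfold slot_pt. destruct (Nat.ltb_spec j nu); destruct (Nat.eqb_spec j nu); auto; lia. Qed.

Lemma slot_nu q nu t : slot_pt q nu t nu = t.
Proof. unfold slot_pt. rewrite Nat.eqb_refl. destruct (Nat.ltb_spec nu nu); auto; lia. Qed.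

Lemma box_slot n r q nu t : box n r q -> (nu < n)%nat -> - r nu < t < r nu -> box n r (slot_pt q nu t).
Proof. intros Hq Hnu Ht. rewrite slot_zb. apply box_upd; auto. apply zb_box; auto. Qed.

Lemma integral_RInt f a b : ex_RInt f a b -> integral f a b = RInt f a b.
Proof.
  intros H. pose proof (ex_RInt_Reals_0 _ _ _ H) as pr.
  unfold integral.
  assert (E : exists I, exists pr : Riemann_integrable f a b, RiemannInt pr = I) by (exists (RiemannInt pr); exists pr; auto).
  destruct (epsilon_spec (inhabits 0) _ E) as [pr' Hpr']. rewrite <- Hpr'. symmetry. apply RInt_Reals.
Qed.

Lemma cont_line n r G p i t : Cont n r G -> (i < n)%nat -> box n r (upd p i t) ->
  continuous (fun s => G (upd p i s)) t.
Proof.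
  intros HG Hi Hb. apply continuity_pt_filterlim.
  intros eps He. destruct (HG _ Hb eps He) as [d [Hd H]].
  destruct (box_upd_near n r (upd p i t) i Hb Hi) as [d2 [Hd2 H2]].
  exists (Rmin d d2). split. apply Rmin_pos; auto.
  intros y [_ Hy]. unfold R_dist in *. simpl. apply H.
  - rewrite <- (upd_upd p i t y). apply H2. rewrite upd_eq. eapply Rlt_le_trans; [exact Hy|apply Rmin_r].
  - intros j Hj. unfold upd. destruct (Nat.eqb_spec j i).
    eapply Rlt_le_trans; [exact Hy|apply Rmin_l]. rewrite Rminus_eq_0, Rabs_R0; auto.
Qed.

Lemma ex_RInt_slot n r G q nu a b : Cont n r G -> box n r q -> (nu < n)%nat ->
  - r nu < a < r nu -> - r nu < b < r nu -> ex_RInt (fun t => G (slot_pt q nu t)) a b.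
Proof.
  intros HG Hq Hnu Ha Hb. apply (ex_RInt_continuous (V:=R_CompleteNormedModule)). intros z Hz.
  assert (Hz' : - r nu < z < r nu).
  { split. eapply Rlt_le_trans; [|apply Hz]. apply Rmin_glb_lt; lra.
    eapply Rle_lt_trans; [apply Hz|]. apply Rmax_lub_lt; lra. }
  apply (continuous_ext (fun s => G (upd (zb nu q) nu s))). intros s. rewrite <- slot_zb. reflexivity.
  apply cont_line with n r; auto. rewrite <- slot_zb. apply box_slot; auto.
Qed.

Lemma box_2d n r p i j : box n r p -> (i < n)%nat -> (j < n)%nat ->
  exists d, 0 < d /\ forall u v, Rabs (u - p i) < d -> Rabs (v - p j) < d ->
    box n r (upd (upd p i u) j v).
Proof.
  intros Hp Hi Hj. destruct (box_open n r p Hp) as [d [Hd H]]. exists d; split; auto.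
  intros u v Hu Hv. apply H.
  - intros k Hk. unfold upd. destruct (Nat.eqb_spec k j). subst; auto.
    destruct (Nat.eqb_spec k i). subst; auto. rewrite Rminus_eq_0, Rabs_R0; auto.
  - intros k Hk. rewrite !upd_neq by lia. apply (proj2 Hp); auto.
Qed.

Lemma cont_2d n r F p i j : Cont n r F -> box n r p -> (i < n)%nat -> (j < n)%nat ->
  continuity_2d_pt (fun u v => F (upd (upd p i u) j v)) (p i) (p j).
Proof.
  intros HF Hp Hi Hj eps. destruct (HF p Hp eps (cond_pos eps)) as [d1 [Hd1 H1]].
  destruct (box_2d n r p i j Hp Hi Hj) as [d [Hd H]].
  exists (mkposreal _ (Rmin_pos _ _ Hd1 Hd)). simpl. intros u v Hu Hv.
  rewrite !upd_same. apply H1.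
  - apply H. eapply Rlt_le_trans; [exact Hu|apply Rmin_r]. eapply Rlt_le_trans; [exact Hv|apply Rmin_r].
  - intros k Hk. unfold upd. destruct (Nat.eqb_spec k j). subst.
    eapply Rlt_le_trans; [exact Hv|apply Rmin_l].
    destruct (Nat.eqb_spec k i). subst. eapply Rlt_le_trans; [exact Hu|apply Rmin_l].
    rewrite Rminus_eq_0, Rabs_R0; auto.
Qed.

Definition Iv (nu : nat) (G : point -> R) (q : point) : R :=
  integral (fun t => G (slot_pt q nu t)) 0 (q nu).

Lemma Iv_RInt n r nu G q : Cont n r G -> box n r q -> (nu < n)%nat ->
  Iv nu G q = RInt (fun t => G (slot_pt q nu t)) 0 (q nu).
Proof.
  intros HG Hq Hnu. unfold Iv. apply integral_RInt. apply ex_RInt_slot with n r; auto.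
  pose proof (box_r_pos n r q nu Hq Hnu). lra. apply (proj1 Hq); auto.
Qed.

Lemma Iv_zero n r nu G : Cont n r G -> (forall i, (i < n)%nat -> 0 < r i) -> (nu < n)%nat ->
  Iv nu G zero_pt = 0.
Proof.
  intros HG Hr Hnu. rewrite Iv_RInt with n r nu G zero_pt; auto. unfold zero_pt. exact (RInt_point (V:=R_CompleteNormedModule) 0 _).
  apply zero_box; auto.
Qed.

Lemma hp_Iv_lt nu G q j : (j < nu)%nat -> has_partial (Iv nu G) j q 0.
Proof.
  intros H. rewrite hp_iff. eapply is_derive_ext; [|exact (is_derive_const (K:=R_AbsRing) (Iv nu G q) (q j))].
  intros s. simpl. unfold Iv. rewrite upd_neq by lia. f_equal.
  apply functional_extensionality; intro t. rewrite slot_upd_le by lia. auto.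
Qed.

Lemma hp_Iv_eq n r nu G q : Cont n r G -> box n r q -> (nu < n)%nat ->
  has_partial (Iv nu G) nu q (G (zb nu q)).
Proof.
  intros HG Hq Hnu. rewrite hp_iff.
  set (g := fun t => G (slot_pt q nu t)).
  pose proof (proj1 Hq nu Hnu) as Hqn. pose proof (box_r_pos n r q nu Hq Hnu) as Hr.
  assert (Hloc : exists d, 0 < d /\ forall s, Rabs (s - q nu) < d -> - r nu < s < r nu).
  { exists (Rmin (r nu - q nu) (q nu + r nu)). split. apply Rmin_pos; lra.
    intros s Hs. pose proof (Rmin_l (r nu - q nu) (q nu + r nu)). pose proof (Rmin_r (r nu - q nu) (q nu + r nu)).
    revert Hs. unfold Rabs; destruct Rcase_abs; intros; lra. }
  apply is_derive_ext_loc with (fun s => RInt g 0 s).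
  { apply locally_of. destruct Hloc as [d [Hd H]]. exists d; split; auto. intros s Hs.
    unfold Iv. rewrite upd_eq. rewrite integral_RInt.
    - apply RInt_ext. intros x _. unfold g. rewrite slot_upd_le; auto.
    - apply (ex_RInt_ext g). intros x _. unfold g. rewrite slot_upd_le; auto.
      apply ex_RInt_slot with n r; auto. lra. }
  replace (G (zb nu q)) with (g (q nu)).
  2:{ unfold g. rewrite slot_top. auto. }
  apply (is_derive_RInt (V:=R_CompleteNormedModule) g (RInt g 0) 0).
  - apply locally_of. destruct Hloc as [d [Hd H]]. exists d; split; auto. intros s Hs.
    apply (RInt_correct (V:=R_CompleteNormedModule)). apply ex_RInt_slot with n r; auto. lra.
  - unfold g. apply (continuous_ext (fun s => G (upd (zb nu q) nu s))). intros s. rewrite <- slot_zb. reflexivity.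
    apply cont_line with n r; auto. rewrite <- slot_zb. apply box_slot; auto.
Qed.

Lemma interval_in (a b c : R) : - a < b < a -> - a < 0 -> forall t, Rmin 0 b <= t <= Rmax 0 b -> - a < t < a.
Proof. intros H1 H2 t [Ht1 Ht2]. split.
  eapply Rlt_le_trans; [|apply Ht1]. apply Rmin_glb_lt; lra.
  eapply Rle_lt_trans; [apply Ht2|]. apply Rmax_lub_lt; lra. Qed.

Lemma hp_Iv_gt n r nu G q j : Cont n r G -> Parts n r G -> Cont n r (pd G j) -> box n r q ->
  (nu < j)%nat -> (j < n)%nat -> has_partial (Iv nu G) j q (Iv nu (pd G j) q).
Proof.
  intros HG HGp HGj Hq Hnj Hj.
  assert (Hnu : (nu < n)%nat) by lia.
  pose proof (proj1 Hq nu Hnu) as Hqn. pose proof (box_r_pos n r q nu Hq Hnu) as Hr.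
  assert (Hint : forall t, Rmin 0 (q nu) <= t <= Rmax 0 (q nu) -> - r nu < t < r nu).
  { apply interval_in; auto; lra. }
  set (f := fun s t => G (upd (slot_pt q nu t) j s)).
  assert (Der : forall s t, box n r (upd (slot_pt q nu t) j s) ->
     is_derive (fun u => f u t) s (pd G j (upd (slot_pt q nu t) j s))).
  { intros s t Hb. pose proof (HGp j Hj _ Hb) as H. rewrite hp_iff in H. rewrite upd_eq in H.
    eapply is_derive_ext; [|exact H]. intros u; simpl. unfold f. now rewrite upd_upd. }
  assert (Bx : forall s t, box n r (upd q j s) -> - r nu < t < r nu -> box n r (upd (slot_pt q nu t) j s)).
  { intros s t Hs Ht. rewrite <- slot_upd_gt by lia. apply box_slot; auto. }
  destruct (box_upd_near n r q j Hq Hj) as [d [Hd Hbd]].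
  rewrite hp_iff.
  apply is_derive_ext_loc with (fun s => RInt (fun t => f s t) 0 (q nu)).
  { apply locally_of. exists d; split; auto. intros s Hs.
    unfold Iv. rewrite upd_neq by lia. rewrite integral_RInt.
    - apply RInt_ext. intros x _. unfold f. rewrite slot_upd_gt; auto.
    - apply ex_RInt_slot with n r; auto. lra. }
  replace (Iv nu (pd G j) q) with (RInt (fun t => Derive (fun u => f u t) (q j)) 0 (q nu)).
  2:{ rewrite Iv_RInt with n r nu (pd G j) q; auto. apply RInt_ext. intros t Ht.
      assert (Ht' : - r nu < t < r nu) by (apply Hint; lra).
      transitivity (pd G j (upd (slot_pt q nu t) j (q j))).
      { apply is_derive_unique, Der, Bx; auto. rewrite upd_same; auto. }
      f_equal. rewrite <- (slot_gt q nu t j) by auto. apply upd_same. }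
  apply (is_derive_RInt_param f 0 (q nu) (q j)).
  - apply locally_of. exists d; split; auto. intros s Hs t Ht.
    eexists. apply Der. apply Bx; auto.
  - intros t Ht. set (p0 := slot_pt q nu t).
    assert (Hp0 : box n r p0) by (apply box_slot; auto).
    destruct (box_2d n r p0 nu j Hp0 Hnu Hj) as [d2 [Hd2 Hb2]].
    pose proof (cont_2d n r (pd G j) p0 j nu HGj Hp0 Hj Hnu) as C.
    assert (E1 : p0 j = q j) by (apply slot_gt; auto).
    assert (E2 : p0 nu = t) by (apply slot_nu).
    rewrite E1, E2 in C.
    eapply continuity_2d_pt_ext_loc; [|exact C].
    exists (mkposreal d2 Hd2). simpl. intros u v Hu Hv.
    rewrite upd_comm by lia. unfold p0. rewrite slot_line.
    assert (Hb : box n r (upd (slot_pt q nu v) j u)).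
    { rewrite <- (slot_line q nu t v). fold p0. apply Hb2; [rewrite E2|rewrite E1]; auto. }
    symmetry. apply is_derive_unique. apply Der. auto.
  - apply locally_of. exists d; split; auto. intros s Hs.
    apply (ex_RInt_ext (fun t => G (slot_pt (upd q j s) nu t))).
    intros x _. unfold f. rewrite slot_upd_gt; auto.
    apply ex_RInt_slot with n r; auto. lra.
Qed.

Lemma close_slot n q q' nu t t' D : 0 < D -> Rabs (t - t') < D -> close n q q' D ->
  close n (slot_pt q nu t') (slot_pt q' nu t) D.
Proof.
  intros HD Ht Hc i Hi. unfold slot_pt. destruct (Nat.ltb_spec i nu).
  rewrite Rminus_eq_0, Rabs_R0; auto. destruct (Nat.eqb_spec i nu); auto.
Qed.

Lemma tube n r G q nu alpha : Cont n r G -> box n r q -> (nu < n)%nat -> 0 <= alpha < r nu ->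
  forall eps, 0 < eps -> exists d, 0 < d /\ forall q', box n r q' -> close n q q' d ->
    forall t, - alpha <= t <= alpha -> Rabs (G (slot_pt q' nu t) - G (slot_pt q nu t)) < eps.
Proof.
  intros HG Hq Hnu Ha eps He.
  assert (Hex : forall t, exists dl, 0 < dl /\ (- alpha <= t <= alpha -> forall y, box n r y ->
      close n (slot_pt q nu t) y dl -> Rabs (G y - G (slot_pt q nu t)) < eps / 2)).
  { intros t. destruct (classic (- alpha <= t <= alpha)) as [Ht|Ht].
    - assert (Hb : box n r (slot_pt q nu t)) by (apply box_slot; auto; lra).
      destruct (HG _ Hb (eps/2)) as [dl [Hdl H]]. lra. exists dl; split; auto.
    - exists 1; split. lra. intros; contradiction. }
  set (dl := fun t => proj1_sig (constructive_indefinite_description _ (Hex t))).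
  assert (Hdl : forall t, 0 < dl t /\ (- alpha <= t <= alpha -> forall y, box n r y ->
      close n (slot_pt q nu t) y (dl t) -> Rabs (G y - G (slot_pt q nu t)) < eps / 2)).
  { intros t. unfold dl. destruct (constructive_indefinite_description _ (Hex t)). simpl. auto. }
  destruct (compactness_value_1d (- alpha) alpha (fun t => mkposreal (dl t) (proj1 (Hdl t)))) as [d Hd].
  exists d. split. apply cond_pos. intros q' Hq' Hc t Ht.
  apply NNPP; intro Hn. apply (Hd t Ht). intros [t' [Ht' [H1 H2]]]. apply Hn. simpl in H1, H2.
  destruct (Hdl t') as [P1 P2].
  assert (A1 : Rabs (G (slot_pt q' nu t) - G (slot_pt q nu t')) < eps / 2).
  { apply P2; auto. apply box_slot; auto; lra. apply close_slot; auto.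
    intros i Hi. eapply Rlt_le_trans; [apply Hc; auto|auto]. }
  assert (A2 : Rabs (G (slot_pt q nu t) - G (slot_pt q nu t')) < eps / 2).
  { apply P2; auto. apply box_slot; auto; lra. apply close_slot; auto.
    intros i Hi. rewrite Rminus_eq_0, Rabs_R0; auto. }
  revert A1 A2. unfold Rabs; repeat destruct Rcase_abs; intros; lra.
Qed.

Lemma abs_RInt_le f a b M : ex_RInt f a b -> (forall t, Rmin a b <= t <= Rmax a b -> Rabs (f t) <= M) ->
  Rabs (RInt f a b) <= Rabs (b - a) * M.
Proof.
  intros He H. destruct (Rle_dec a b).
  - rewrite (Rabs_right (b - a)) by lra. apply abs_RInt_le_const; auto. intros t Ht. apply H.
    rewrite Rmin_left, Rmax_right; auto.
  - rewrite <- Rabs_Ropp. replace (- RInt f a b) with (RInt f b a) by (rewrite <- (opp_RInt_swap f a b He); reflexivity).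
    rewrite (Rabs_left (b - a)) by lra.
    replace (- (b - a)) with (a - b) by ring. apply abs_RInt_le_const. lra.
    apply ex_RInt_swap; auto. intros t Ht. apply H. rewrite Rmin_right, Rmax_left; lra.
Qed.

Lemma cont_Iv n r nu G : Cont n r G -> (nu < n)%nat -> Cont n r (Iv nu G).
Proof.
  intros HG Hnu x Hx eps He.
  pose proof (proj1 Hx nu Hnu) as Hxn. pose proof (box_r_pos n r x nu Hx Hnu) as Hr.
  set (a := Rabs (x nu)). assert (Ha : a < r nu) by (unfold a, Rabs; destruct Rcase_abs; lra).
  assert (Ha0 : 0 <= a) by apply Rabs_pos.
  set (eta := (r nu - a) / 2). set (alpha := a + eta).
  assert (He1 : 0 < eps / (2 * (alpha + 1))).
  { apply Rdiv_lt_0_compat; auto. unfold alpha, eta; lra. }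
  destruct (tube n r G x nu alpha HG Hx Hnu) with (eps := eps / (2 * (alpha + 1))) as [d1 [Hd1 T]]; auto.
  unfold alpha, eta; lra.
  set (g := fun t => G (slot_pt x nu t)).
  assert (Cg : continuous g (x nu)).
  { unfold g. apply (continuous_ext (fun s => G (upd (zb nu x) nu s))). intros s. rewrite <- slot_zb. reflexivity.
    apply cont_line with n r; auto. rewrite <- slot_zb. apply box_slot; auto. }
  apply continuity_pt_filterlim in Cg. destruct (Cg 1 ltac:(lra)) as [d2 [Hd2 C2]].
  set (Mb := Rabs (g (x nu)) + 1).
  assert (HMb : 0 < Mb) by (unfold Mb; pose proof (Rabs_pos (g (x nu))); lra).
  assert (Bd : forall t, Rabs (t - x nu) < d2 -> Rabs (g t) <= Mb).
  { intros t Ht. destruct (Req_dec t (x nu)). subst; unfold Mb; lra.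
    assert (R_dist (g t) (g (x nu)) < 1). { apply C2. split. split. exact I. intro E; apply H; auto. exact Ht. }
    unfold R_dist, Mb in *. revert H0. unfold Rabs; repeat destruct Rcase_abs; intros; lra. }
  exists (Rmin d1 (Rmin eta (Rmin d2 (eps / (2 * Mb))))).
  assert (Hp : 0 < eps / (2 * Mb)) by (apply Rdiv_lt_0_compat; lra).
  split. repeat apply Rmin_pos; auto. unfold eta; lra.
  intros y Hy Hc.
  assert (Hc1 : close n x y d1). { intros i Hi. eapply Rlt_le_trans. apply Hc; auto. apply Rmin_l. }
  assert (Hyn : Rabs (y nu - x nu) < Rmin eta (Rmin d2 (eps / (2 * Mb)))).
  { eapply Rlt_le_trans. apply Hc; auto. apply Rmin_r. }
  pose proof (Rmin_l eta (Rmin d2 (eps / (2 * Mb)))) as m1.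
  pose proof (Rmin_l d2 (eps / (2 * Mb))) as m2. pose proof (Rmin_r d2 (eps / (2 * Mb))) as m3.
  pose proof (Rmin_r eta (Rmin d2 (eps / (2 * Mb)))) as m4.
  assert (Hyb : Rabs (y nu) <= alpha).
  { unfold alpha. pose proof (Rabs_triang_inv (y nu) (x nu)). fold a in H. lra. }
  assert (Hyr : - r nu < y nu < r nu) by (revert Hyb; unfold alpha, eta, Rabs; destruct Rcase_abs; intros; lra).
  rewrite (Iv_RInt n r nu G y HG Hy Hnu), (Iv_RInt n r nu G x HG Hx Hnu).
  assert (E0 : forall b, - r nu < b < r nu -> ex_RInt g 0 b).
  { intros b Hb. apply ex_RInt_slot with n r; auto. lra. }
  assert (Ey : ex_RInt (fun t => G (slot_pt y nu t)) 0 (y nu)) by (apply ex_RInt_slot with n r; auto; lra).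
  fold g.
  assert (Ex' : ex_RInt g (x nu) (y nu)).
  { apply ex_RInt_slot with n r; auto. }
  assert (D : RInt (fun t => G (slot_pt y nu t)) 0 (y nu) - RInt g 0 (y nu) =
              RInt (fun t => G (slot_pt y nu t) - g t) 0 (y nu)).
  { symmetry. apply (RInt_minus (V:=R_CompleteNormedModule)); auto. }
  assert (B1 : Rabs (RInt (fun t => G (slot_pt y nu t) - g t) 0 (y nu)) <= Rabs (y nu - 0) * (eps / (2 * (alpha + 1)))).
  { apply abs_RInt_le. apply (ex_RInt_minus (V:=R_NormedModule)); auto.
    intros t Ht. left. unfold g. apply T; auto.
    assert (Rabs t <= Rabs (y nu)).
    { revert Ht. unfold Rmin, Rmax, Rabs; repeat destruct Rle_dec; repeat destruct Rcase_abs; intros; lra. }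
    revert H Hyb. unfold Rabs; repeat destruct Rcase_abs; intros; lra. }
  assert (B2 : Rabs (RInt g (x nu) (y nu)) <= Rabs (y nu - x nu) * Mb).
  { apply abs_RInt_le; auto. intros t Ht. apply Bd.
    assert (Rabs (t - x nu) <= Rabs (y nu - x nu)).
    { revert Ht. unfold Rmin, Rmax, Rabs; repeat destruct Rle_dec; repeat destruct Rcase_abs; intros; lra. }
    lra. }
  assert (Ch : RInt g 0 (x nu) + RInt g (x nu) (y nu) = RInt g 0 (y nu)).
  { apply (RInt_Chasles (V:=R_CompleteNormedModule)); auto. }
  replace (RInt (fun t => G (slot_pt y nu t)) 0 (y nu) - RInt g 0 (x nu))
    with ((RInt (fun t => G (slot_pt y nu t)) 0 (y nu) - RInt g 0 (y nu)) + RInt g (x nu) (y nu))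
    by (rewrite <- Ch; ring).
  rewrite D.
  eapply Rle_lt_trans. apply Rabs_triang.
  rewrite Rminus_0_r in B1.
  assert (S1 : Rabs (y nu) * (eps / (2 * (alpha + 1))) < eps / 2).
  { assert (Hal : 0 < alpha + 1) by (unfold alpha, eta; lra).
    apply Rle_lt_trans with (alpha * (eps / (2 * (alpha + 1)))).
    apply Rmult_le_compat_r; lra.
    replace (alpha * (eps / (2 * (alpha + 1)))) with ((eps / 2) * (alpha / (alpha + 1))) by (field; lra).
    apply Rlt_le_trans with (eps / 2 * 1). apply Rmult_lt_compat_l. lra.
    apply Rmult_lt_reg_r with (alpha + 1); auto. unfold Rdiv; rewrite Rmult_assoc, Rinv_l; lra. lra. }
  assert (S2 : Rabs (y nu - x nu) * Mb < eps / 2).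
  { apply Rlt_le_trans with ((eps / (2 * Mb)) * Mb). apply Rmult_lt_compat_r; lra.
    right. field. lra. }
  lra.
Qed.

Definition DIv nu G j q := if Nat.ltb j nu then 0 else if Nat.eqb j nu then G (zb nu q) else Iv nu (pd G j) q.

Lemma hp_Iv n r nu G j x : Sk n r 1 G -> box n r x -> (j < n)%nat -> (nu < n)%nat ->
  has_partial (Iv nu G) j x (DIv nu G j x).
Proof.
  intros [G1 [G2 G3]] Hx Hj Hnu. unfold DIv.
  destruct (Nat.ltb_spec j nu). apply hp_Iv_lt; auto.
  destruct (Nat.eqb_spec j nu). subst. apply hp_Iv_eq with n r; auto.
  apply hp_Iv_gt with n r; auto. apply G3; auto. lia.
Qed.

Lemma Sk_Iv n r nu k G : (nu < n)%nat -> (forall k, Sk n r k G) -> Sk n r k (Iv nu G).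
Proof.
  intros Hnu. revert G. induction k; intros G HG.
  - simpl. apply cont_Iv; auto. apply (HG O).
  - assert (E : forall j, (j < n)%nat -> forall x, box n r x -> pd (Iv nu G) j x = DIv nu G j x).
    { intros. apply pd_spec. apply hp_Iv with n r; auto. }
    simpl. split; [apply cont_Iv; auto; apply (HG O)|split].
    + intros j Hj x Hx. rewrite E by auto. apply hp_Iv with n r; auto.
    + intros j Hj. apply Sk_ext with (DIv nu G j). intros y Hy; rewrite E; auto.
      unfold DIv. destruct (Nat.ltb j nu). apply Sk_const.
      destruct (Nat.eqb j nu). apply Sk_zb. apply HG.
      apply (IHk (pd G j)). apply Sk_pd; auto.
Qed.

Lemma sum_to_ext N f g : (forall i, (i < N)%nat -> f i = g i) -> sum_to N f = sum_to N g.
Proof. induction N; simpl; intros H; auto. rewrite IHN, H; auto. Qed.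

Lemma sum_to_zero N f : (forall i, (i < N)%nat -> f i = 0) -> sum_to N f = 0.
Proof. induction N; simpl; intros H; auto. rewrite IHN, H; auto; lra. Qed.

Lemma sum_delta N p j c : sum_to N (fun a => if Nat.eqb (p + a) j then c else 0) =
  if andb (Nat.leb p j) (Nat.ltb j (p + N)) then c else 0.
Proof.
  induction N; simpl.
  - destruct (Nat.leb_spec p j); destruct (Nat.ltb_spec j (p + 0)); simpl; auto; lia.
  - rewrite IHN. destruct (Nat.eqb_spec (p + N) j); destruct (Nat.leb_spec p j);
      destruct (Nat.ltb_spec j (p + N)); destruct (Nat.ltb_spec j (p + S N)); simpl; try lra; lia.
Qed.

Lemma telescope N mu (D F : nat -> R) : (mu < N)%nat -> (forall nu, (mu < nu)%nat -> D nu = 0) ->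
  D mu = F mu -> (forall nu, (nu < mu)%nat -> D nu = F nu - F (S nu)) -> sum_to N D = F O.
Proof.
  intros HN H1 H2 H3.
  assert (A : forall k, (k <= mu)%nat -> sum_to k D = F O - F k).
  { induction k; simpl; intros Hk. lra. rewrite IHk by lia. rewrite H3 by lia. ring. }
  assert (B : forall k, (S mu <= k)%nat -> sum_to k D = F O).
  { induction k; intros Hk. lia. destruct (Nat.eq_dec k mu). subst. simpl. rewrite A, H2 by lia. ring.
    simpl. rewrite IHk by lia. rewrite H1 by lia. ring. }
  apply B; lia.
Qed.

Lemma Sk_u n m r h P K mu : smooth_on n (box n r) h -> (forall k tau, smooth_on n (box n r) (P k tau)) ->
  (forall tau mu, smooth_on n (box n r) (K tau mu)) -> forall k, Sk n r k (u_fun n m h P K mu).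
Proof.
  intros Hh HP HK k. unfold u_fun. apply Sk_sum. intros a Ha. apply Sk_sum. intros b Hb.
  apply Sk_mult. apply Sk_mult. apply Sk_pd; auto. apply smooth_to_Sk; auto.
  apply smooth_to_Sk; auto. apply smooth_to_Sk; auto.
Qed.

Lemma u_zero n m h P K mu : (forall i, (i < n)%nat -> pd h i zero_pt = 0) -> u_fun n m h P K mu zero_pt = 0.
Proof.
  intros H. unfold u_fun. apply sum_to_zero. intros i Hi. apply sum_to_zero. intros j Hj.
  rewrite H by auto. ring.
Qed.

Lemma zb_zero nu : zb nu zero_pt = zero_pt.
Proof. apply functional_extensionality; intro j; unfold zb, zero_pt. destruct (Nat.ltb j nu); auto. Qed.

Lemma schwarz n r f x i j : (forall k, Sk n r k f) -> box n r x -> (i < n)%nat -> (j < n)%nat ->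
  pd (pd f j) i x = pd (pd f i) j x.
Proof.
  intros Hf Hx Hi Hj. destruct (Nat.eq_dec i j) as [->|Hij]; auto.
  destruct (Hf 3%nat) as [C0 [Pf Hf3]].
  destruct (Hf3 i Hi) as [Ci [Pi Hi3]]. destruct (Hf3 j Hj) as [Cj [Pj Hj3]].
  destruct (Hi3 j Hj) as [Cij _]. destruct (Hj3 i Hi) as [Cji _].
  set (PP := fun u v => upd (upd x i u) j v).
  set (F := fun u v => f (PP u v)).
  destruct (box_2d n r x i j Hx Hi Hj) as [d [Hd Hb]].
  assert (Ej : forall u v t, upd (PP u v) j t = PP u t) by (intros; unfold PP; apply upd_upd).
  assert (Ei : forall u v t, upd (PP u v) i t = PP t v).
  { intros; unfold PP. apply functional_extensionality; intro k; unfold upd.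
    destruct (Nat.eqb_spec k i); destruct (Nat.eqb_spec k j); subst; auto; contradiction. }
  assert (Pj_ : forall u v, PP u v j = v) by (intros; unfold PP; apply upd_eq).
  assert (Pi_ : forall u v, PP u v i = u) by (intros; unfold PP; rewrite upd_neq by auto; apply upd_eq).
  assert (Da : forall u v, box n r (PP u v) -> is_derive (fun t => F u t) v (pd f j (PP u v))).
  { intros u v Hb'. pose proof (Pf j Hj _ Hb') as H. rewrite hp_iff, Pj_ in H.
    eapply is_derive_ext; [|exact H]. intros t; simpl. unfold F; rewrite Ej; auto. }
  assert (Db : forall u v, box n r (PP u v) -> is_derive (fun t => F t v) u (pd f i (PP u v))).
  { intros u v Hb'. pose proof (Pf i Hi _ Hb') as H. rewrite hp_iff, Pi_ in H.
    eapply is_derive_ext; [|exact H]. intros t; simpl. unfold F; rewrite Ei; auto. }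
  assert (Bx : forall u v, Rabs (u - x i) < d -> Rabs (v - x j) < d -> box n r (PP u v)) by (intros; apply Hb; auto).
  assert (Half : forall a b z, Rabs (a - b) < d / 2 -> Rabs (z - a) < d / 2 -> Rabs (z - b) < d).
  { intros a b z H1 H2. pose proof (Rabs_triang (z - a) (a - b)). replace (z - a + (a - b)) with (z - b) in H by ring. lra. }
  assert (Dc : forall u v, Rabs (u - x i) < d / 2 -> Rabs (v - x j) < d / 2 ->
      is_derive (fun z => Derive (fun t => F z t) v) u (pd (pd f j) i (PP u v))).
  { intros u v Hu Hv. apply is_derive_ext_loc with (fun z => pd f j (PP z v)).
    { apply locally_of. exists (d / 2). split. lra. intros z Hz. symmetry. apply is_derive_unique. apply Da.
      apply Bx; [apply Half with u|]; auto; lra. }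
    pose proof (Pj i Hi _ (Bx u v ltac:(lra) ltac:(lra))) as H. rewrite hp_iff, Pi_ in H.
    eapply is_derive_ext; [|exact H]. intros t; simpl. rewrite Ei; auto. }
  assert (Dd : forall u v, Rabs (u - x i) < d / 2 -> Rabs (v - x j) < d / 2 ->
      is_derive (fun z => Derive (fun t => F t z) u) v (pd (pd f i) j (PP u v))).
  { intros u v Hu Hv. apply is_derive_ext_loc with (fun z => pd f i (PP u z)).
    { apply locally_of. exists (d / 2). split. lra. intros z Hz. symmetry. apply is_derive_unique. apply Db.
      apply Bx; [|apply Half with v]; auto; lra. }
    pose proof (Pi j Hj _ (Bx u v ltac:(lra) ltac:(lra))) as H. rewrite hp_iff, Pj_ in H.
    eapply is_derive_ext; [|exact H]. intros t; simpl. rewrite Ej; auto. }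
  assert (Hd2 : 0 < d / 2) by lra.
  pose proof (Schwarz F (x i) (x j)) as S.
  assert (PPx : PP (x i) (x j) = x) by (unfold PP; rewrite !upd_same; auto).
  assert (Z0 : forall a, Rabs (a - a) < d / 2) by (intros; rewrite Rminus_eq_0, Rabs_R0; lra).
  assert (L : Derive (fun z => Derive (fun t => F z t) (x j)) (x i) = pd (pd f j) i (PP (x i) (x j))).
  { apply is_derive_unique. apply Dc; auto. }
  assert (L2 : Derive (fun z => Derive (fun t => F t z) (x i)) (x j) = pd (pd f i) j (PP (x i) (x j))).
  { apply is_derive_unique. apply Dd; auto. }
  rewrite PPx in L, L2. rewrite <- L, <- L2. apply S.
  - exists (mkposreal _ Hd2). simpl. intros u v Hu Hv. split; [|split; [|split]].
    + eexists. apply Db. apply Bx; lra.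
    + eexists. apply Da. apply Bx; lra.
    + eexists. apply Dc; auto.
    + eexists. apply Dd; auto.
  - apply continuity_2d_pt_ext_loc with (fun u v => pd (pd f j) i (PP u v)).
    { exists (mkposreal _ Hd2). simpl. intros u v Hu Hv. symmetry. apply is_derive_unique. apply Dc; auto. }
    apply (cont_2d n r (pd (pd f j) i) x i j); auto.
  - apply continuity_2d_pt_ext_loc with (fun u v => pd (pd f i) j (PP u v)).
    { exists (mkposreal _ Hd2). simpl. intros u v Hu Hv. symmetry. apply is_derive_unique. apply Dd; auto. }
    apply (cont_2d n r (pd (pd f i) j) x i j); auto.
Qed.

Lemma hhat_eq n m u varpi : hhat_formula n m u varpi =
  fun q => sum_to (n - m) (fun mu => Iv mu (u mu) q) + varpi / 2 * sum_to m (fun a => q (n - m + a)%nat ^ 2).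
Proof. reflexivity. Qed.

Lemma sq_eq j : (fun q : point => q j ^ 2) = (fun q => q j * q j).
Proof. apply functional_extensionality; intro q; ring. Qed.

Lemma Sk_hhat n m r u varpi : (m < n)%nat -> (forall mu k, Sk n r k (u mu)) ->
  forall k, Sk n r k (hhat_formula n m u varpi).
Proof.
  intros Hmn Hu k. rewrite hhat_eq. apply Sk_plus.
  - apply Sk_sum. intros a Ha. apply Sk_Iv. lia. auto.
  - apply Sk_mult. apply Sk_const. apply Sk_sum. intros a Ha. rewrite sq_eq. apply Sk_mult; apply Sk_coord.
Qed.

Definition dl (a b : nat) : R := if Nat.eqb a b then 1 else 0.

Lemma pd_hhat n m r u varpi i x : (m < n)%nat -> (forall mu k, Sk n r k (u mu)) -> box n r x -> (i < n)%nat ->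
  has_partial (hhat_formula n m u varpi) i x
    (sum_to (n - m) (fun mu => DIv mu (u mu) i x) + (if Nat.leb (n - m) i then varpi * x i else 0)).
Proof.
  intros Hmn Hu Hx Hi. rewrite hhat_eq.
  match goal with |- has_partial _ _ _ ?V => set (W := V) end.
  assert (Hs : has_partial (fun q => sum_to m (fun a => q (n - m + a)%nat ^ 2)) i x
      (sum_to m (fun a => dl (n - m + a) i * x (n - m + a)%nat + x (n - m + a)%nat * dl (n - m + a) i))).
  { apply hp_sum. intros a Ha. rewrite sq_eq. unfold dl. apply hp_mult; apply hp_coord. }
  pose proof (hp_mult _ _ _ _ _ _ (hp_const (varpi / 2) i x) Hs) as H2.
  assert (H1 : has_partial (fun q => sum_to (n - m) (fun mu => Iv mu (u mu) q)) i x
      (sum_to (n - m) (fun mu => DIv mu (u mu) i x))).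
  { apply hp_sum. intros a Ha. apply hp_Iv with n r; auto. lia. }
  pose proof (hp_plus _ _ _ _ _ _ H1 H2) as H3. simpl in H3.
  replace W with (sum_to (n - m) (fun mu => DIv mu (u mu) i x) +
     (0 * sum_to m (fun a => x (n - m + a)%nat ^ 2) +
      varpi / 2 * sum_to m (fun a => dl (n - m + a) i * x (n - m + a)%nat + x (n - m + a)%nat * dl (n - m + a) i))).
  exact H3.
  unfold W. f_equal.
  rewrite (sum_to_ext m (fun a => dl (n - m + a) i * x (n - m + a)%nat + x (n - m + a)%nat * dl (n - m + a) i) (fun a => if Nat.eqb (n - m + a) i then 2 * x i else 0)).
  - rewrite sum_delta. replace (n - m + m)%nat with n by lia.
    destruct (Nat.leb_spec (n - m) i); destruct (Nat.ltb_spec i n); simpl; try lia. field. field.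
  - intros a Ha. unfold dl. destruct (Nat.eqb_spec (n - m + a) i). subst. ring. ring.
Qed.

Lemma FTC_step2 n r (G U : point -> R) q nu : (nu < n)%nat -> box n r q ->
  Cont n r G -> (forall k, Sk n r k U) ->
  (forall x, box n r x -> G x = pd U nu x) ->
  Iv nu G q = U (zb nu q) - U (zb (S nu) q).
Proof.
  intros Hnu Hq HG HU E.
  pose proof (proj1 Hq nu Hnu) as Hqn. pose proof (box_r_pos n r q nu Hq Hnu) as Hr.
  assert (Hint : forall t, Rmin 0 (q nu) <= t <= Rmax 0 (q nu) -> - r nu < t < r nu).
  { apply interval_in; auto; lra. }
  destruct (HU 1%nat) as [_ [PU HU1]]. pose proof (HU1 nu Hnu) as CU.
  rewrite (Iv_RInt n r nu G q HG Hq Hnu).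
  rewrite (RInt_ext _ (fun t => pd U nu (slot_pt q nu t))).
  2:{ intros t Ht. apply E. apply box_slot; auto. apply Hint. lra. }
  rewrite <- slot_top, <- slot_bot.
  apply is_RInt_unique.
  apply (is_RInt_derive (V:=R_CompleteNormedModule) (fun t => U (slot_pt q nu t))).
  - intros t Ht. assert (Hb : box n r (slot_pt q nu t)) by (apply box_slot; auto).
    pose proof (PU nu Hnu _ Hb) as H. rewrite hp_iff, slot_nu in H.
    eapply is_derive_ext; [|exact H]. intros s; simpl. rewrite slot_line; auto.
  - intros t Ht. apply (continuous_ext (fun s => pd U nu (upd (zb nu q) nu s))). intros s. rewrite <- slot_zb. reflexivity.
    apply cont_line with n r; auto. rewrite <- slot_zb. apply box_slot; auto.
Qed.

Lemma hhat_solves n m r u varpi : (m < n)%nat -> (forall mu k, Sk n r k (u mu)) ->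
  integrable_cond n m r u -> is_solution n m r u (hhat_formula n m u varpi).
Proof.
  intros Hmn Hu Hic. split. apply Sk_to_smooth, Sk_hhat; auto.
  intros x Hx mu Hmu. rewrite (pd_spec _ _ _ _ (pd_hhat n m r u varpi mu x Hmn Hu Hx ltac:(lia))).
  destruct (Nat.leb_spec (n - m) mu). lia. rewrite Rplus_0_r.
  replace (u mu x) with (u mu (zb 0 x)) by (rewrite zb_0; auto).
  apply (telescope (n - m) mu (fun nu => DIv nu (u nu) mu x) (fun nu => u mu (zb nu x))); auto.
  - intros nu Hnu. unfold DIv. destruct (Nat.ltb_spec mu nu); auto; lia.
  - unfold DIv. destruct (Nat.ltb_spec mu mu); try lia. rewrite Nat.eqb_refl. auto.
  - intros nu Hnu. unfold DIv. destruct (Nat.ltb_spec mu nu); try lia.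
    destruct (Nat.eqb_spec mu nu); try lia.
    apply (FTC_step2 n r); [lia|auto| |auto|].
    apply Sk_cont with O. apply Sk_pd; auto. lia.
    intros y Hy. apply Hic; auto. lia.
Qed.

Lemma hhat_crit n m r u varpi : (m < n)%nat -> (forall mu k, Sk n r k (u mu)) ->
  (forall i, (i < n)%nat -> 0 < r i) -> (forall mu, u mu zero_pt = 0) ->
  forall i, (i < n)%nat -> pd (hhat_formula n m u varpi) i zero_pt = 0.
Proof.
  intros Hmn Hu Hr Hu0 i Hi. pose proof (zero_box n r Hr) as Z.
  rewrite (pd_spec _ _ _ _ (pd_hhat n m r u varpi i zero_pt Hmn Hu Z Hi)).
  rewrite sum_to_zero. destruct (Nat.leb (n - m) i); unfold zero_pt; ring.
  intros nu Hnu. unfold DIv. destruct (Nat.ltb i nu); auto. destruct (Nat.eqb i nu).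
  rewrite zb_zero; auto. apply Iv_zero with n r; auto. apply Sk_cont with O. apply Sk_pd; auto. lia.
Qed.

Lemma hhat_hess_hi n m r u varpi i j : (m < n)%nat -> (forall mu k, Sk n r k (u mu)) ->
  (forall i, (i < n)%nat -> 0 < r i) -> (n - m <= j)%nat -> (j < n)%nat -> (i < n)%nat ->
  pd (pd (hhat_formula n m u varpi) j) i zero_pt =
  (if Nat.ltb i (n - m) then pd (u i) j zero_pt else 0) + varpi * dl j i.
Proof.
  intros Hmn Hu Hr Hj1 Hj2 Hi. pose proof (zero_box n r Hr) as Z.
  rewrite (pd_local n r _ (fun x => sum_to (n - m) (fun nu => Iv nu (pd (u nu) j) x) + varpi * x j) i zero_pt); auto.
  2:{ intros x Hx. rewrite (pd_spec _ _ _ _ (pd_hhat n m r u varpi j x Hmn Hu Hx Hj2)).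
      destruct (Nat.leb_spec (n - m) j); try lia. f_equal. apply sum_to_ext. intros nu Hnu.
      unfold DIv. destruct (Nat.ltb_spec j nu); try lia. destruct (Nat.eqb_spec j nu); try lia. auto. }
  apply pd_spec.
  replace ((if Nat.ltb i (n - m) then pd (u i) j zero_pt else 0) + varpi * dl j i) with
    (sum_to (n - m) (fun nu => DIv nu (pd (u nu) j) i zero_pt) + (0 * zero_pt j + varpi * dl j i)).
  - apply hp_plus. apply hp_sum. intros nu Hnu. apply hp_Iv with n r; auto. apply Sk_pd; auto. lia.
    unfold dl. apply hp_mult. apply hp_const. apply hp_coord.
  - f_equal. 2: ring.
    rewrite (sum_to_ext _ _ (fun nu => if Nat.eqb (0 + nu) i then pd (u i) j zero_pt else 0)).
    + rewrite sum_delta. destruct (Nat.ltb_spec i (n - m)); destruct (Nat.leb_spec 0 i); destruct (Nat.ltb_spec i (0 + (n - m))); simpl; auto; lia.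
    + intros nu Hnu. unfold DIv. simpl. destruct (Nat.ltb_spec i nu).
      destruct (Nat.eqb_spec nu i); auto; lia.
      destruct (Nat.eqb_spec i nu). subst. rewrite Nat.eqb_refl. rewrite zb_zero; auto.
      destruct (Nat.eqb_spec nu i); try lia. apply Iv_zero with n r; auto.
      apply Sk_cont with O. apply Sk_pd; auto. apply Sk_pd; auto. lia.
Qed.

Lemma sol_hess_lo n m r u hh i j : is_solution n m r u hh -> (forall i, (i < n)%nat -> 0 < r i) ->
  (j < n - m)%nat -> (i < n)%nat -> pd (pd hh j) i zero_pt = pd (u j) i zero_pt.
Proof.
  intros [_ Hs] Hr Hj Hi. apply pd_local with n r; auto. apply zero_box; auto.
Qed.

Lemma sum_to_plus N f g : sum_to N (fun i => f i + g i) = sum_to N f + sum_to N g.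
Proof. induction N; simpl. ring. rewrite IHN. ring. Qed.

Lemma sum_to_scal N c f : sum_to N (fun i => c * f i) = c * sum_to N f.
Proof. induction N; simpl. ring. rewrite IHN. ring. Qed.

Lemma sum_to_minus N f g : sum_to N (fun i => f i - g i) = sum_to N f - sum_to N g.
Proof. induction N; simpl. ring. rewrite IHN. ring. Qed.

Lemma sum_to_swap N M f : sum_to N (fun i => sum_to M (fun j => f i j)) = sum_to M (fun j => sum_to N (fun i => f i j)).
Proof.
  induction N; simpl. rewrite sum_to_zero; auto.
  rewrite IHN. rewrite <- sum_to_plus. auto.
Qed.

Lemma sum_to_add p m f : sum_to (p + m) f = sum_to p f + sum_to m (fun a => f (p + a)%nat).
Proof. induction m; simpl. rewrite Nat.add_0_r. ring. rewrite Nat.add_succ_r. simpl. rewrite IHm. ring. Qed.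

Lemma sum_to_le N f g : (forall i, (i < N)%nat -> f i <= g i) -> sum_to N f <= sum_to N g.
Proof. induction N; simpl; intros H. lra. apply Rplus_le_compat. apply IHN; intros; apply H; lia. apply H; lia. Qed.

Lemma sum_to_nonneg N f : (forall i, (i < N)%nat -> 0 <= f i) -> 0 <= sum_to N f.
Proof. intros H. rewrite <- (sum_to_zero N (fun _ => 0)) by auto. apply sum_to_le; auto. Qed.

Lemma sum_prod N M a b : sum_to N (fun i => sum_to M (fun j => a i * b j)) = sum_to N a * sum_to M b.
Proof.
  rewrite <- (sum_to_ext N (fun i => a i * sum_to M b)). 2:{ intros. rewrite sum_to_scal. auto. }
  rewrite (sum_to_ext N (fun i => a i * sum_to M b) (fun i => sum_to M b * a i)) by (intros; ring).
  rewrite sum_to_scal. ring.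
Qed.

Lemma sum_dl N f l : (l < N)%nat -> sum_to N (fun j => f j * dl j l) = f l.
Proof.
  intros H. rewrite (sum_to_ext N _ (fun j => if Nat.eqb (0 + j) l then f l else 0)).
  - rewrite sum_delta. destruct (Nat.leb_spec 0 l); destruct (Nat.ltb_spec l (0 + N)); simpl; auto; lia.
  - intros i Hi. unfold dl. simpl. destruct (Nat.eqb_spec i l). subst. ring. ring.
Qed.

Lemma sum_dl' N f l : (l < N)%nat -> sum_to N (fun j => dl j l * f j) = f l.
Proof. intros H. rewrite <- (sum_dl N f l H). apply sum_to_ext. intros; ring. Qed.

Lemma quad_nonneg A B C : (forall t, 0 <= A * t * t - 2 * C * t + B) -> 0 <= A -> C * C <= A * B.
Proof.
  intros H HA. destruct (Req_dec A 0) as [->|HA'].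
  - destruct (Req_dec C 0) as [->|HC]. lra.
    specialize (H ((B + 1) / (2 * C))). exfalso.
    replace (0 * ((B + 1) / (2 * C)) * ((B + 1) / (2 * C)) - 2 * C * ((B + 1) / (2 * C)) + B) with (-1) in H by (field; auto). lra.
  - specialize (H (C / A)).
    replace (A * (C / A) * (C / A) - 2 * C * (C / A) + B) with ((A * B - C * C) / A) in H by (field; auto).
    assert (0 < A) by lra.
    apply Rmult_le_compat_r with (r := A) in H; [|lra]. unfold Rdiv in H. rewrite Rmult_assoc, Rinv_l in H; lra.
Qed.

Lemma CS N a b : sum_to N (fun i => a i * b i) * sum_to N (fun i => a i * b i) <=
  sum_to N (fun i => a i * a i) * sum_to N (fun i => b i * b i).
Proof.
  apply quad_nonneg.
  - intros t. replace (sum_to N (fun i => a i * a i) * t * t - 2 * sum_to N (fun i => a i * b i) * t + sum_to N (fun i => b i * b i))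
      with (sum_to N (fun i => (a i * t - b i) * (a i * t - b i))).
    apply sum_to_nonneg. intros; apply Rle_0_sqr.
    rewrite (sum_to_ext N _ (fun i => (t * t) * (a i * a i) - ((2 * t) * (a i * b i) - b i * b i))) by (intros; ring).
    rewrite sum_to_minus, sum_to_minus, !sum_to_scal. ring.
  - apply sum_to_nonneg. intros; apply Rle_0_sqr.
Qed.

Definition Qf k (A : nat -> nat -> R) v := sum_to k (fun i => sum_to k (fun j => v i * A i j * v j)).
Definition Nf k (v : nat -> R) := sum_to k (fun i => v i * v i).

Lemma Nf_nonneg k v : 0 <= Nf k v.
Proof. apply sum_to_nonneg. intros; apply Rle_0_sqr. Qed.

Lemma Qf_ext k A B v w : (forall i j, (i < k)%nat -> (j < k)%nat -> A i j = B i j) ->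
  (forall i, (i < k)%nat -> v i = w i) -> Qf k A v = Qf k B w.
Proof. intros H1 H2. apply sum_to_ext; intros i Hi. apply sum_to_ext; intros j Hj. rewrite H1, !H2; auto. Qed.

Lemma Nf_ext k v w : (forall i, (i < k)%nat -> v i = w i) -> Nf k v = Nf k w.
Proof. intros H. apply sum_to_ext; intros; rewrite H; auto. Qed.

Lemma Qf_S k A v : Qf (S k) A v = Qf k A v + sum_to k (fun i => v i * A i k * v k)
   + sum_to k (fun j => v k * A k j * v j) + v k * A k k * v k.
Proof. unfold Qf. simpl. rewrite sum_to_plus. ring. Qed.

Lemma Nf_pos_of k v : (exists i, (i < k)%nat /\ v i <> 0) -> 0 < Nf k v.
Proof.
  intros [i [Hi Hv]]. unfold Nf. induction k; simpl. lia.
  destruct (Nat.eq_dec i k). subst. pose proof (sum_to_nonneg k (fun i => v i * v i) ltac:(intros; apply Rle_0_sqr)).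
  assert (0 < v k * v k) by (apply Rsqr_pos_lt in Hv; unfold Rsqr in Hv; auto). lra.
  assert (0 < sum_to k (fun i => v i * v i)) by (apply IHk; lia). nra.
Qed.

Definition ek (k : nat) : nat -> R := fun i => if Nat.eqb i k then 1 else 0.

Lemma Qf_ek k A l : (l < k)%nat -> Qf k A (ek l) = A l l.
Proof.
  intros Hl. unfold Qf, ek.
  transitivity (sum_to k (fun i => A i l * dl i l)).
  - apply sum_to_ext. intros i Hi.
    transitivity (sum_to k (fun j => ((if Nat.eqb i l then 1 else 0) * A i j) * dl j l)).
    + apply sum_to_ext; intros j Hj; unfold dl; destruct (Nat.eqb j l); ring.
    + rewrite (sum_dl k (fun j => (if Nat.eqb i l then 1 else 0) * A i j) l Hl). unfold dl. destruct (Nat.eqb i l); ring.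
  - exact (sum_dl k (fun i => A i l) l Hl).
Qed.

Lemma posdef_lower k : forall A, posdef k A -> exists c, 0 < c /\ forall v, c * Nf k v <= Qf k A v.
Proof.
  induction k; intros A [Hsym Hpos].
  - exists 1. split. lra. intros v. unfold Nf, Qf. simpl. lra.
  - set (a := A k k).
    assert (Ha : 0 < a).
    { unfold a. rewrite <- (Qf_ek (S k) A k) by lia. apply Hpos. exists k. split. lia. unfold ek. rewrite Nat.eqb_refl. lra. }
    set (S := fun i j => A i j - A i k * A k j / a).
    set (s := fun v : nat -> R => sum_to k (fun j => A k j * v j)).
    assert (Id : forall v, Qf (Datatypes.S k) A v = Qf k S v + a * (v k + s v / a) * (v k + s v / a)).
    { intros v. rewrite Qf_S.
      assert (E1 : Qf k S v = Qf k A v - sum_to k (fun i => v i * A i k) * s v / a).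
      { unfold Qf. unfold Rdiv. rewrite Rmult_assoc, (Rmult_comm (sum_to _ _)), <- sum_to_scal, <- sum_to_minus.
        apply sum_to_ext. intros i Hi. unfold S, s.
        rewrite (sum_to_ext k _ (fun j => v i * A i j * v j - (v i * A i k / a) * (A k j * v j))) by (intros; field; lra).
        rewrite sum_to_minus, sum_to_scal. field. lra. }
      assert (E2 : sum_to k (fun i => v i * A i k) = s v).
      { unfold s. apply sum_to_ext. intros i Hi. rewrite Hsym by lia. ring. }
      assert (E3 : sum_to k (fun i => v i * A i k * v k) = v k * s v).
      { rewrite <- E2. rewrite <- sum_to_scal. apply sum_to_ext. intros; ring. }
      assert (E4 : sum_to k (fun j => v k * A k j * v j) = v k * s v).
      { unfold s. rewrite <- sum_to_scal. apply sum_to_ext. intros; ring. }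
      rewrite E1, E2, E3, E4. fold a. field. lra. }
    assert (Spos : posdef k S).
    { split.
      - intros i j Hi Hj. unfold S. rewrite (Hsym i j), (Hsym i k), (Hsym k j) by lia. field. lra.
      - intros v Hv. set (w := fun i => if Nat.eqb i k then - s v / a else v i).
        assert (Ew : forall i, (i < k)%nat -> w i = v i).
        { intros i Hi. unfold w. destruct (Nat.eqb_spec i k); auto; lia. }
        assert (Es : s w = s v) by (unfold s; apply sum_to_ext; intros; rewrite Ew; auto).
        assert (Hq : 0 < Qf (Datatypes.S k) A w).
        { apply Hpos. destruct Hv as [i [Hi Hvi]]. exists i. split. lia. rewrite Ew; auto. }
        rewrite Id, Es in Hq. unfold w at 2 3 in Hq. rewrite Nat.eqb_refl in Hq.
        replace (a * (- s v / a + s v / a) * (- s v / a + s v / a)) with 0 in Hq by (field; lra).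
        rewrite (Qf_ext k S S w v) in Hq; auto. change (0 < Qf k S v). lra. }
    destruct (IHk S Spos) as [c' [Hc' Hlow]].
    set (W := sum_to k (fun j => A k j * A k j)).
    assert (HW : 0 <= W) by (apply sum_to_nonneg; intros; apply Rle_0_sqr).
    set (beta := 1 + 2 * W / (a * a)).
    assert (Hb : 1 <= beta).
    { unfold beta. assert (0 <= 2 * W / (a * a)). { unfold Rdiv. apply Rmult_le_pos. lra. left. apply Rinv_0_lt_compat. nra. } lra. }
    exists (Rmin (c' / beta) (a / 2)). split.
    { apply Rmin_pos. apply Rdiv_lt_0_compat; lra. lra. }
    intros v. set (c := Rmin (c' / beta) (a / 2)).
    assert (Hc1 : c * beta <= c').
    { apply Rmult_le_reg_r with (/ beta). apply Rinv_0_lt_compat; lra.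
      rewrite Rmult_assoc, Rinv_r by lra. rewrite Rmult_1_r. apply Rmin_l. }
    assert (Hc2 : 2 * c <= a) by (pose proof (Rmin_r (c' / beta) (a / 2)); fold c in H; lra).
    assert (Hc0 : 0 < c) by (apply Rmin_pos; [apply Rdiv_lt_0_compat|]; lra).
    set (y := v k + s v / a).
    assert (Hcs : s v * s v <= W * Nf k v) by (apply (CS k (fun j => A k j) v)).
    assert (HN : Nf (Datatypes.S k) v <= beta * Nf k v + 2 * (y * y)).
    { unfold Nf at 1. simpl. fold (Nf k v).
      assert (Hvk : v k * v k <= 2 * (y * y) + 2 * (s v / a) * (s v / a)).
      { assert (G : forall p q, (p - q) * (p - q) <= 2 * (p * p) + 2 * q * q).
        { intros p q. pose proof (Rle_0_sqr (p + q)). unfold Rsqr in *. lra. }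
        replace (v k) with (y - s v / a) by (unfold y; ring). apply G. }
      assert (Hsa : (s v / a) * (s v / a) <= W * Nf k v / (a * a)).
      { replace ((s v / a) * (s v / a)) with (s v * s v / (a * a)) by (field; lra).
        apply Rmult_le_compat_r. left. apply Rinv_0_lt_compat. nra. auto. }
      unfold beta. replace ((1 + 2 * W / (a * a)) * Nf k v) with (Nf k v + 2 * (W * Nf k v / (a * a))) by (field; lra).
      lra. }
    rewrite Id. fold y. specialize (Hlow v).
    pose proof (Nf_nonneg k v) as HNk.
    assert (c * Nf (Datatypes.S k) v <= c * (beta * Nf k v + 2 * (y * y))) by (apply Rmult_le_compat_l; lra).
    assert (c * beta * Nf k v <= c' * Nf k v) by (apply Rmult_le_compat_r; lra).
    assert (2 * c * (y * y) <= a * (y * y)) by (apply Rmult_le_compat_r; [apply Rle_0_sqr|lra]).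
    nra.
Qed.

Definition Bil k (A : nat -> nat -> R) x y := sum_to k (fun i => sum_to k (fun j => x i * A i j * y j)).

Lemma Qf_lin k A x y t : Qf k A (fun i => x i + t * y i) = Qf k A x + t * (Bil k A x y + Bil k A y x) + t * t * Qf k A y.
Proof.
  unfold Qf, Bil.
  rewrite (sum_to_ext k _ (fun i => sum_to k (fun j => x i * A i j * x j) +
      (t * (sum_to k (fun j => x i * A i j * y j) + sum_to k (fun j => y i * A i j * x j)) +
       t * t * sum_to k (fun j => y i * A i j * y j)))).
  - rewrite !sum_to_plus, !sum_to_scal, !sum_to_plus. ring.
  - intros i Hi. rewrite <- !sum_to_scal, <- !sum_to_plus, <- !sum_to_scal, <- !sum_to_plus.
    apply sum_to_ext. intros; ring.
Qed.

Lemma dl_sym a b : dl a b = dl b a.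
Proof. unfold dl. destruct (Nat.eqb_spec a b); destruct (Nat.eqb_spec b a); auto; lia. Qed.

Lemma Bil_ek1 k A x l : (l < k)%nat -> Bil k A x (ek l) = sum_to k (fun i => x i * A i l).
Proof.
  intros Hl. unfold Bil, ek. apply sum_to_ext. intros i Hi.
  rewrite (sum_to_ext k _ (fun j => (x i * A i j) * dl j l)). apply (sum_dl k (fun j => x i * A i j) l Hl).
  intros j Hj; unfold dl; destruct (Nat.eqb j l); ring.
Qed.

Lemma Bil_ek2 k A x l : (l < k)%nat -> Bil k A (ek l) x = sum_to k (fun j => A l j * x j).
Proof.
  intros Hl. unfold Bil, ek.
  rewrite (sum_to_ext k _ (fun i => dl i l * sum_to k (fun j => A i j * x j))).
  apply (sum_dl' k (fun i => sum_to k (fun j => A i j * x j)) l Hl).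
  intros i Hi. rewrite <- sum_to_scal. apply sum_to_ext. intros j Hj; unfold dl; destruct (Nat.eqb i l); ring.
Qed.

Lemma psd_kernel k A x : (forall i j, (i < k)%nat -> (j < k)%nat -> A i j = A j i) ->
  (forall v, 0 <= Qf k A v) -> Qf k A x = 0 -> forall l, (l < k)%nat -> sum_to k (fun j => A l j * x j) = 0.
Proof.
  intros Hs Hp Hx l Hl. set (b := sum_to k (fun j => A l j * x j)).
  assert (Hb : Bil k A x (ek l) = b /\ Bil k A (ek l) x = b).
  { split. rewrite Bil_ek1 by auto. unfold b. apply sum_to_ext. intros j Hj. rewrite Hs by auto. ring.
    apply Bil_ek2; auto. }
  assert (Hll : 0 <= A l l) by (rewrite <- (Qf_ek k A l Hl); apply Hp).
  apply NNPP; intro Hne.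
  set (t := - b / (A l l + 1)).
  pose proof (Hp (fun i => x i + t * ek l i)) as H. rewrite Qf_lin, Hx, (proj1 Hb), (proj2 Hb), Qf_ek in H by auto.
  assert (E : 0 + t * (b + b) + t * t * A l l = - (b * b) * (A l l + 2) / ((A l l + 1) * (A l l + 1))).
  { unfold t. field. lra. }
  rewrite E in H.
  assert (0 < b * b) by (apply Rsqr_pos_lt in Hne; unfold Rsqr in Hne; auto).
  assert (0 < (b * b) * (A l l + 2) / ((A l l + 1) * (A l l + 1))).
  { apply Rdiv_lt_0_compat. nra. nra. }
  lra.
Qed.

Lemma sq_le_Nf k v i : (i < k)%nat -> v i * v i <= Nf k v.
Proof.
  intros Hi. unfold Nf. induction k; simpl. lia.
  destruct (Nat.eq_dec i k). subst. pose proof (sum_to_nonneg k (fun i => v i * v i) ltac:(intros; apply Rle_0_sqr)). lra.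
  pose proof (IHk ltac:(lia)). pose proof (Rle_0_sqr (v k)). unfold Rsqr in *. lra.
Qed.

Lemma Qf_scal k A c v : Qf k A (fun i => c * v i) = c * c * Qf k A v.
Proof.
  unfold Qf. rewrite <- sum_to_scal. apply sum_to_ext. intros i Hi. rewrite <- sum_to_scal.
  apply sum_to_ext. intros; ring.
Qed.

Lemma Nf_scal k c v : Nf k (fun i => c * v i) = c * c * Nf k v.
Proof. unfold Nf. rewrite <- sum_to_scal. apply sum_to_ext. intros; ring. Qed.

Lemma Qf_shift k A mu v : Qf k (fun i j => A i j - mu * dl i j) v = Qf k A v - mu * Nf k v.
Proof.
  unfold Qf, Nf. rewrite <- sum_to_scal, <- sum_to_minus. apply sum_to_ext. intros i Hi.
  rewrite (sum_to_ext k _ (fun j => v i * A i j * v j - (mu * v i * v j) * dl j i)).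
  rewrite sum_to_minus. rewrite (sum_dl k (fun j => mu * v i * v j) i Hi). ring.
  intros j Hj. rewrite (dl_sym i j). ring.
Qed.

Lemma sum_to_opp N f : sum_to N (fun i => - f i) = - sum_to N f.
Proof. induction N; simpl. ring. rewrite IHN. ring. Qed.

Lemma abs_le1 x : x * x <= 1 -> Rabs x <= 1.
Proof. intros H. unfold Rabs; destruct Rcase_abs; nra. Qed.

Lemma Nf_zero k v : Nf k v = 0 -> forall i, (i < k)%nat -> v i = 0.
Proof. intros H i Hi. pose proof (sq_le_Nf k v i Hi). rewrite H in H0. nra. Qed.

Lemma least_eig_bound k A lam : (1 <= k)%nat -> (forall i j, (i < k)%nat -> (j < k)%nat -> A i j = A j i) ->
  least_eigenvalue k A lam -> forall v, lam * Nf k v <= Qf k A v.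
Proof.
  intros Hk Hs [Heig Hleast].
  set (E := fun z => exists v, Nf k v = 1 /\ z = - Qf k A v).
  set (Bd := sum_to k (fun i => sum_to k (fun j => Rabs (A i j)))).
  assert (HB : bound E).
  { exists Bd. intros z [v [Hv ->]]. cut (- Bd <= Qf k A v). lra.
    unfold Bd, Qf. rewrite <- sum_to_opp. apply sum_to_le. intros i Hi.
    rewrite <- sum_to_opp. apply sum_to_le. intros j Hj.
    assert (Hi1 : Rabs (v i) <= 1) by (apply abs_le1; rewrite <- Hv; apply sq_le_Nf; auto).
    assert (Hj1 : Rabs (v j) <= 1) by (apply abs_le1; rewrite <- Hv; apply sq_le_Nf; auto).
    assert (Rabs (v i * A i j * v j) <= Rabs (A i j)).
    { rewrite !Rabs_mult. pose proof (Rabs_pos (v i)). pose proof (Rabs_pos (v j)). pose proof (Rabs_pos (A i j)).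
      replace (Rabs (A i j)) with (1 * Rabs (A i j) * 1) at 2 by ring.
      apply Rmult_le_compat; auto. apply Rmult_le_pos; auto. apply Rmult_le_compat; auto; lra. }
    pose proof (Rle_abs (- (v i * A i j * v j))). rewrite Rabs_Ropp in H0. lra. }
  assert (Nek : Nf k (ek 0) = 1).
  { unfold Nf. rewrite (sum_to_ext k _ (fun i => 1 * dl i 0)). apply (sum_dl k (fun _ => 1) 0). lia.
    intros i Hi. unfold ek, dl. destruct (Nat.eqb i 0); ring. }
  assert (Hne : exists z, E z) by (exists (- Qf k A (ek 0)); exists (ek 0); split; auto).
  destruct (completeness E HB Hne) as [mlub [Hub Hlub]].
  set (mu := - mlub).
  assert (low : forall v, mu * Nf k v <= Qf k A v).
  { intro v. destruct (Req_dec (Nf k v) 0) as [H0|H0].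
    - rewrite H0. rewrite (Qf_ext k A A v (fun _ => 0)); auto. 2: apply Nf_zero; auto.
      unfold Qf. rewrite sum_to_zero. lra. intros i Hi. apply sum_to_zero. intros; ring.
    - pose proof (Nf_nonneg k v) as HN. assert (HN' : 0 < Nf k v) by lra.
      set (sN := sqrt (Nf k v)). assert (Hs0 : 0 < sN) by (apply sqrt_lt_R0; auto).
      assert (Hss : sN * sN = Nf k v) by (apply sqrt_sqrt; lra).
      assert (Hw : E (- Qf k A (fun i => / sN * v i))).
      { exists (fun i => / sN * v i). split; auto. rewrite Nf_scal. rewrite <- Hss. field. lra. }
      apply Hub in Hw. rewrite Qf_scal in Hw. unfold mu.
      assert (/ sN * / sN = / Nf k v) by (rewrite <- Hss; field; lra).
      rewrite H in Hw.
      apply Rmult_le_reg_r with (/ Nf k v). apply Rinv_0_lt_compat; auto.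
      replace (- mlub * Nf k v * / Nf k v) with (- mlub) by (field; lra). lra. }
  set (A' := fun i j => A i j - mu * dl i j).
  assert (Hpsd : forall v, 0 <= Qf k A' v).
  { intros v. unfold A'. rewrite Qf_shift. specialize (low v). lra. }
  destruct (classic (exists x, (exists i, (i < k)%nat /\ x i <> 0) /\
      forall l, (l < k)%nat -> sum_to k (fun j => A' l j * x j) = 0)) as [[x [Hx1 Hx2]] | Hno].
  - assert (Hlm : lam <= mu).
    { apply Hleast. exists x. split; auto. intros l Hl. specialize (Hx2 l Hl). unfold A' in Hx2.
      rewrite (sum_to_ext k _ (fun j => A l j * x j - mu * x j * dl j l)) in Hx2.
      rewrite sum_to_minus, (sum_dl k (fun j => mu * x j) l Hl) in Hx2. lra.
      intros j Hj. rewrite (dl_sym l j). ring. }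
    intros v. pose proof (Nf_nonneg k v). specialize (low v).
    assert (lam * Nf k v <= mu * Nf k v) by (apply Rmult_le_compat_r; auto). lra.
  - exfalso.
    assert (Hpd : posdef k A').
    { split.
      - intros i j Hi Hj. unfold A'. rewrite Hs, dl_sym by auto. auto.
      - intros x Hx. destruct (Rle_lt_or_eq_dec _ _ (Hpsd x)) as [H|H]; auto.
        exfalso. apply Hno. exists x. split; auto. apply psd_kernel; auto.
        intros i j Hi Hj. unfold A'. rewrite Hs, dl_sym by auto. auto. }
    destruct (posdef_lower k A' Hpd) as [c [Hc Hlow]].
    assert (Hup : is_upper_bound E (- (mu + c))).
    { intros z [v [Hv ->]]. specialize (Hlow v). unfold A' in Hlow. rewrite Qf_shift, Hv in Hlow. lra. }
    apply Hlub in Hup. unfold mu in Hup. lra.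
Qed.

Lemma Qf_zero_ext p q A v : (forall a, v (p + a)%nat = 0) -> Qf (p + q) A v = Qf p A v.
Proof.
  intros H. unfold Qf. rewrite sum_to_add.
  rewrite (sum_to_zero q (fun a => sum_to (p + q) (fun j => v (p + a)%nat * A (p + a)%nat j * v j))).
  2:{ intros a Ha. apply sum_to_zero. intros j Hj. rewrite H. ring. }
  rewrite Rplus_0_r. apply sum_to_ext. intros i Hi. rewrite sum_to_add.
  rewrite (sum_to_zero q (fun a => v i * A i (p + a)%nat * v (p + a)%nat)). ring. intros b Hb. rewrite H. ring.
Qed.

Lemma posdef_sub p k H M : (p <= k)%nat -> posdef k H ->
  (forall i j, (i < p)%nat -> (j < p)%nat -> H i j = M i j) -> posdef p M.
Proof.
  intros Hpk [Hs Hp] E. split.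
  - intros i j Hi Hj. rewrite <- !E by auto. apply Hs; lia.
  - intros v [i [Hi Hv]]. set (v' := fun i => if Nat.ltb i p then v i else 0).
    assert (Hk : k = (p + (k - p))%nat) by lia.
    assert (Hq : 0 < Qf k H v').
    { apply Hp. exists i. split. lia. unfold v'. destruct (Nat.ltb_spec i p); auto; lia. }
    rewrite Hk, Qf_zero_ext in Hq.
    2:{ intros a. unfold v'. destruct (Nat.ltb_spec (p + a) p); auto; lia. }
    rewrite (Qf_ext p H M v' v) in Hq; auto.
    intros j Hj. unfold v'. destruct (Nat.ltb_spec j p); auto; lia.
Qed.

Definition Hblk p (M B : nat -> nat -> R) varpi : nat -> nat -> R := fun i j =>
  if Nat.ltb j p then (if Nat.ltb i p then M i j else B j (i - p)%nat)
  else (if Nat.ltb i p then B i (j - p)%nat else varpi * dl j i).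

Lemma Qf_blk p m M B varpi v :
  Qf (p + m) (Hblk p M B varpi) v = Qf p M v
    + 2 * sum_to p (fun i => v i * sum_to m (fun a => B i a * v (p + a)%nat))
    + varpi * Nf m (fun a => v (p + a)%nat).
Proof.
  unfold Qf. rewrite sum_to_add.
  assert (E1 : forall i, (i < p)%nat -> sum_to (p + m) (fun j => v i * Hblk p M B varpi i j * v j) =
      sum_to p (fun j => v i * M i j * v j) + v i * sum_to m (fun a => B i a * v (p + a)%nat)).
  { intros i Hi. rewrite sum_to_add. f_equal.
    - apply sum_to_ext. intros j Hj. unfold Hblk. destruct (Nat.ltb_spec j p); try lia. destruct (Nat.ltb_spec i p); try lia. auto.
    - rewrite <- sum_to_scal. apply sum_to_ext. intros a Ha. unfold Hblk.
      destruct (Nat.ltb_spec (p + a) p); try lia. destruct (Nat.ltb_spec i p); try lia.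
      replace (p + a - p)%nat with a by lia. ring. }
  assert (E2 : forall a, (a < m)%nat -> sum_to (p + m) (fun j => v (p + a)%nat * Hblk p M B varpi (p + a)%nat j * v j) =
      sum_to p (fun j => v (p + a)%nat * B j a * v j) + varpi * (v (p + a)%nat * v (p + a)%nat)).
  { intros a Ha. rewrite sum_to_add. f_equal.
    - apply sum_to_ext. intros j Hj. unfold Hblk. destruct (Nat.ltb_spec j p); try lia.
      destruct (Nat.ltb_spec (p + a) p); try lia. replace (p + a - p)%nat with a by lia. auto.
    - rewrite (sum_to_ext m _ (fun b => (varpi * v (p + a)%nat * v (p + b)%nat) * dl b a)).
      rewrite (sum_dl m (fun b => varpi * v (p + a)%nat * v (p + b)%nat) a Ha). ring.
      intros b Hb. unfold Hblk. destruct (Nat.ltb_spec (p + b) p); try lia.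
      destruct (Nat.ltb_spec (p + a) p); try lia. unfold dl.
      destruct (Nat.eqb_spec (p + b) (p + a)); destruct (Nat.eqb_spec b a); try lia; ring. }
  rewrite (sum_to_ext p _ _ E1), (sum_to_ext m _ _ E2).
  rewrite !sum_to_plus. unfold Nf. rewrite sum_to_scal.
  assert (E3 : sum_to m (fun a => sum_to p (fun j => v (p + a)%nat * B j a * v j)) =
     sum_to p (fun i => v i * sum_to m (fun a => B i a * v (p + a)%nat))).
  { rewrite sum_to_swap. apply sum_to_ext. intros j Hj. rewrite <- sum_to_scal. apply sum_to_ext. intros; ring. }
  rewrite E3. ring.
Qed.

Lemma posdef_blk p m M B varpi c H :
  (forall i j, (i < p)%nat -> (j < p)%nat -> M i j = M j i) -> 0 < c ->
  (forall x, c * Nf p x <= Qf p M x) ->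
  varpi > / c * sum_to p (fun mu => sum_to m (fun a => B mu a * B mu a)) ->
  (forall i j, (i < p + m)%nat -> (j < p + m)%nat -> H i j = Hblk p M B varpi i j) ->
  posdef (p + m) H.
Proof.
  intros Hs Hc Hlow Hv EH. split.
  - intros i j Hi Hj. rewrite !EH by auto. unfold Hblk.
    destruct (Nat.ltb_spec j p); destruct (Nat.ltb_spec i p); auto. rewrite dl_sym; auto.
  - intros v Hv0. change (0 < Qf (p + m) H v). rewrite (Qf_ext _ H (Hblk p M B varpi) v v); auto.
    rewrite Qf_blk.
    set (y := fun a => v (p + a)%nat). set (z := fun i => sum_to m (fun a => B i a * y a)).
    set (S := sum_to p (fun mu => sum_to m (fun a => B mu a * B mu a))).
    set (X := sum_to p (fun i => v i * z i)).
    change (0 < Qf p M v + 2 * X + varpi * Nf m y).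
    assert (HZ : Nf p z <= S * Nf m y).
    { unfold Nf at 1. apply Rle_trans with (sum_to p (fun i => sum_to m (fun a => B i a * B i a) * Nf m y)).
      - apply sum_to_le. intros i Hi. unfold z. apply (CS m (fun a => B i a) y).
      - right. rewrite (sum_to_ext p _ (fun i => Nf m y * sum_to m (fun a => B i a * B i a))) by (intros; ring).
        rewrite sum_to_scal. unfold S. ring. }
    assert (HX : 0 <= c * c * Nf p v + 2 * c * X + Nf p z).
    { replace (c * c * Nf p v + 2 * c * X + Nf p z) with (sum_to p (fun i => (c * v i + z i) * (c * v i + z i))).
      apply sum_to_nonneg; intros; apply Rle_0_sqr.
      unfold Nf, X. rewrite (sum_to_ext p _ (fun i => (c * c) * (v i * v i) + ((2 * c) * (v i * z i) + z i * z i))) by (intros; ring).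
      rewrite !sum_to_plus, !sum_to_scal. ring. }
    specialize (Hlow v).
    assert (HS0 : 0 <= S) by (apply sum_to_nonneg; intros; apply sum_to_nonneg; intros; apply Rle_0_sqr).
    pose proof (Nf_nonneg m y) as Hy0. pose proof (Nf_nonneg p v) as Hx0.
    assert (K1 : - (Nf p z / c) - c * Nf p v <= 2 * X).
    { apply Rmult_le_reg_l with c; auto. replace (c * (- (Nf p z / c) - c * Nf p v)) with (- Nf p z - c * c * Nf p v) by (field; lra). lra. }
    assert (K2 : Nf p z / c <= S * Nf m y / c) by (apply Rmult_le_compat_r; [left; apply Rinv_0_lt_compat; auto|auto]).
    destruct (Rle_lt_or_eq_dec _ _ Hy0) as [Hy|Hy].
    + assert (K3 : S * Nf m y / c < varpi * Nf m y).
      { replace (S * Nf m y / c) with ((/ c * S) * Nf m y) by (field; lra). apply Rmult_lt_compat_r; auto. }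
      lra.
    + assert (Hyz : forall a, (a < m)%nat -> y a = 0) by (apply Nf_zero; auto).
      assert (HX0 : X = 0).
      { unfold X. apply sum_to_zero. intros i Hi. unfold z. rewrite sum_to_zero. ring. intros a Ha. rewrite Hyz; auto. ring. }
      rewrite <- Hy, HX0. assert (0 < Nf p v).
      { apply Nf_pos_of. destruct Hv0 as [i [Hi Hvi]]. destruct (Nat.ltb_spec i p).
        exists i; auto. exfalso. apply Hvi. replace i with (p + (i - p))%nat by lia. apply (Hyz (i - p)%nat). lia. }
      nra.
Qed.

Lemma Qf_eig k A x lam : (forall i, (i < k)%nat -> sum_to k (fun j => A i j * x j) = lam * x i) ->
  Qf k A x = lam * Nf k x.
Proof.
  intros H. unfold Qf, Nf. rewrite <- sum_to_scal. apply sum_to_ext. intros i Hi.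
  rewrite (sum_to_ext k _ (fun j => x i * (A i j * x j))) by (intros; ring).
  rewrite sum_to_scal, H by auto. ring.
Qed.

Lemma hess_posdef n m r u varpi c : (m < n)%nat -> (forall mu k, Sk n r k (u mu)) ->
  (forall i, (i < n)%nat -> 0 < r i) -> integrable_cond n m r u -> 0 < c ->
  (forall x, c * Nf (n - m) x <= Qf (n - m) (fun mu nu => pd (u nu) mu zero_pt) x) ->
  varpi > / c * sum_to (n - m) (fun mu => sum_to m (fun a => (pd (u mu) (n - m + a)%nat zero_pt) ^ 2)) ->
  posdef n (hessian (hhat_formula n m u varpi) zero_pt).
Proof.
  intros Hmn Hu Hr Hic Hc Hlow Hv.
  pose proof (zero_box n r Hr) as Z.
  assert (Hsol : is_solution n m r u (hhat_formula n m u varpi)) by (apply hhat_solves; auto).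
  assert (En : (n - m + m)%nat = n) by lia.
  pose proof (posdef_blk (n - m) m (fun mu nu => pd (u nu) mu zero_pt)
     (fun mu a => pd (u mu) (n - m + a)%nat zero_pt) varpi c (hessian (hhat_formula n m u varpi) zero_pt)) as HH.
  rewrite En in HH. apply HH; [ | exact Hc | exact Hlow | | ].
  - intros i j Hi Hj. simpl. apply Hic; auto.
  - rewrite (sum_to_ext (n - m) _ (fun mu => sum_to m (fun a => (pd (u mu) (n - m + a)%nat zero_pt) ^ 2))); auto.
    intros i Hi. apply sum_to_ext. intros; ring.
  - intros i j Hi Hj. unfold hessian, Hblk.
    destruct (Nat.ltb_spec j (n - m)).
    + rewrite (sol_hess_lo n m r u _ i j Hsol Hr) by lia.
      destruct (Nat.ltb_spec i (n - m)); auto. replace (n - m + (i - (n - m)))%nat with i by lia. auto.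
    + rewrite (hhat_hess_hi n m r u varpi i j Hmn Hu Hr) by lia.
      destruct (Nat.ltb_spec i (n - m)).
      * replace (n - m + (j - (n - m)))%nat with j by lia. unfold dl.
        destruct (Nat.eqb_spec j i); try lia. ring.
      * ring.
Qed.

Theorem mainTheorem8
  (n m : nat) (r : nat -> R) (h : point -> R) (P K : nat -> nat -> point -> R)
  (Hm1 : (1 <= m)%nat) (Hmn : (m < n)%nat)
  (Hr : forall i, (i < n)%nat -> 0 < r i)
  (Hh : smooth_on n (box n r) h)
  (HP : forall k tau, smooth_on n (box n r) (P k tau))
  (HK : forall tau mu, smooth_on n (box n r) (K tau mu))
  (HKsym : forall x tau mu, box n r x -> K tau mu x = K mu tau x)
  (Hcrit : forall i, (i < n)%nat -> pd h i zero_pt = 0) :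
  let u := u_fun n m h P K in
  let M := fun mu nu => pd (u nu) mu zero_pt in
  (* (i) *)
  ((exists hh, is_solution n m r u hh) <-> integrable_cond n m r u) /\
  (* (ii) *)
  (integrable_cond n m r u ->
     forall varpi, is_solution n m r u (hhat_formula n m u varpi)) /\
  (* formula for M *)
  (forall mu nu, (mu < n - m)%nat -> (nu < n - m)%nat ->
     M mu nu = sum_to n (fun k => sum_to (n - m) (fun tau =>
                 pd (pd h k) mu zero_pt * P k tau zero_pt * K tau nu zero_pt))) /\
  (* (iii) *)
  (integrable_cond n m r u ->
     ((exists hh, is_solution n m r u hh /\ critical_posdef n hh zero_pt)
        <-> posdef (n - m) M) /\
     (posdef (n - m) M -> forall lam varpi, least_eigenvalue (n - m) M lam ->
        varpi > / lam * sum_to (n - m) (fun mu => sum_to m (fun a =>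
                   (pd (u mu) (n - m + a)%nat zero_pt) ^ 2)) ->
        critical_posdef n (hhat_formula n m u varpi) zero_pt)).

Proof.
  intros u M.
  assert (Hu : forall mu k, Sk n r k (u mu)) by (intros; apply Sk_u; auto).
  assert (Hu0 : forall mu, u mu zero_pt = 0) by (intros; apply u_zero; auto).
  pose proof (zero_box n r Hr) as Z.
  assert (Hii : integrable_cond n m r u -> forall varpi, is_solution n m r u (hhat_formula n m u varpi)).
  { intros Hic varpi. apply hhat_solves; auto. }
  split; [|split; [|split]].
  - split.
    + intros [hh [Hs1 Hs2]] x Hx mu nu Hmu Hnu.
      rewrite (pd_local n r (u nu) (pd hh nu) mu x); auto; [|intros; symmetry; apply Hs2; auto|lia].
      rewrite (pd_local n r (u mu) (pd hh mu) nu x); auto; [|intros; symmetry; apply Hs2; auto|lia].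
      apply (schwarz n r); [apply smooth_to_Sk; auto | auto | lia | lia].
    + intros Hic. exists (hhat_formula n m u 0). apply Hii; auto.
  - exact Hii.
  - intros mu nu Hmu Hnu. unfold M. apply pd_spec.
    assert (Sh : forall k, (k < n)%nat -> Sk n r 1 (pd h k)) by (intros; apply Sk_pd; auto; apply smooth_to_Sk; auto).
    assert (SP : forall k tau, Sk n r 1 (P k tau)) by (intros; apply smooth_to_Sk; auto).
    assert (SK : forall tau mu, Sk n r 1 (K tau mu)) by (intros; apply smooth_to_Sk; auto).
    replace (sum_to n (fun k => sum_to (n - m) (fun tau => pd (pd h k) mu zero_pt * P k tau zero_pt * K tau nu zero_pt)))
      with (sum_to n (fun k => sum_to (n - m) (fun tau =>
        (pd (pd h k) mu zero_pt * P k tau zero_pt + pd h k zero_pt * pd (P k tau) mu zero_pt) * K tau nu zero_pt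
        + pd h k zero_pt * P k tau zero_pt * pd (K tau nu) mu zero_pt))).
    + unfold u, u_fun. apply hp_sum. intros k Hk. apply hp_sum. intros tau Htau.
      apply hp_mult; [apply hp_mult|].
      * destruct (Sh k Hk) as [_ [Pr _]]. apply Pr; auto. lia.
      * destruct (SP k tau) as [_ [Pr _]]. apply Pr; auto. lia.
      * destruct (SK tau nu) as [_ [Pr _]]. apply Pr; auto. lia.
    + apply sum_to_ext. intros k Hk. apply sum_to_ext. intros tau Htau. rewrite Hcrit by auto. ring.
  - intros Hic.
    assert (Msym : forall i j, (i < n - m)%nat -> (j < n - m)%nat -> M i j = M j i).
    { intros i j Hi Hj. unfold M. apply Hic; auto. }
    split.
    + split.
      * intros [hh [Hsol [Hcr Hpd]]]. apply (posdef_sub (n - m) n (hessian hh zero_pt) M). lia. auto.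
        intros i j Hi Hj. unfold hessian, M. apply (sol_hess_lo n m r u hh i j Hsol Hr); lia.
      * intros HM. destruct (posdef_lower (n - m) M HM) as [c [Hc Hlow]].
        set (S := sum_to (n - m) (fun mu => sum_to m (fun a => (pd (u mu) (n - m + a)%nat zero_pt) ^ 2))).
        exists (hhat_formula n m u (/ c * S + 1)). split. apply Hii; auto. split.
        -- apply (hhat_crit n m r); auto.
        -- apply (hess_posdef n m r u _ c); auto. unfold S. lra.
    + intros HM lam varpi Hlam Hv. split. apply (hhat_crit n m r); auto.
      assert (Hk : (1 <= n - m)%nat) by lia.
      pose proof (least_eig_bound (n - m) M lam Hk Msym Hlam) as Hlow.
      assert (Hl0 : 0 < lam).
      { destruct Hlam as [[x [Hx Hex]] _]. pose proof (Qf_eig (n - m) M x lam Hex) as E.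
        pose proof (proj2 HM x Hx) as Q. change (0 < Qf (n - m) M x) in Q.
        pose proof (Nf_pos_of (n - m) x Hx). rewrite E in Q. nra. }
      apply (hess_posdef n m r u _ lam); auto.
Qed.
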